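(* Let $T$ be a triangle. For every $\bm{p}_2\in\mathcal{P}_2(T)^2$ and every $w_2\in\mathcal{P}_2(T)$, $$\int_T(\bm{p}_2-\Pi_h^1\bm{p}_2)\cdot\nabla^\perp w_2=\sum_{k=1}^3\int_{e_k}\mathcal{B}_k(\bm{p}_2)\,\partial_{\bm{t}_k}^2w_2.$$
   Context: $T$ has vertices $\bm{z}_1,\bm{z}_2,\bm{z}_3$ ordered counterclockwise, indices mod 3; $e_k$ is the edge opposite $\bm{z}_k$, $\ell_k$ its length, $\bm{t}_k$ its unit tangent oriented counterclockwise along $\partial T$, $\bm{n}_k$ its unit outward normal; $d$ is the diameter of the circumscribed circle. $\nabla^\perp v=(-\partial_{x_2}v,\partial_{x_1}v)^\intercal$; directional derivatives act componentwise on vector fields. $\Pi_h^1\bm{q}\in\mathcal{RT}_1(T)=\{(v_1,v_2)^\intercal+v_3(x_1,x_2)^\intercal:v_i\in\mathcal{P}_1(T)\}$ is determined by $\int_e(\bm{q}-\Pi_h^1\bm{q})\cdot\bm{n}_ev=0$ for all $v\in\mathcal{P}_1(e)$ on each edge $e$ and $\int_T(\bm{q}-\Pi_h^1\bm{q})=\bm{0}$. Define $\mathcal{D}_{1,k}^{11}\bm{q}=\bm{t}_k\cdot\partial_{\bm{t}_k}^2\bm{q}$, $\mathcal{D}_{1,k}^{12}\bm{q}=\mathcal{D}_{1,k}^{21}\bm{q}=\bm{t}_k\cdot\partial_{\bm{t}_k}\partial_{\bm{n}_k}\bm{q}$, $\mathcal{D}_{1,k}^{22}\bm{q}=\bm{t}_k\cdot\partial_{\bm{n}_k}^2\bm{q}$,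 and $\mathcal{D}_{2,k}^{jl}$ the same with $\bm{t}_k\cdot$ replaced by $\bm{n}_k\cdot$. Coefficients: $\mu^1_{11,k}=\frac{1}{5760}\big(3\ell_k^4-3(\ell_{k-1}^2-\ell_{k+1}^2)^2-4\ell_k^2(\ell_{k-1}^2+\ell_{k+1}^2)\big)$; $\mu^1_{12,k}=\mu^1_{21,k}=\frac{\ell_1\ell_2\ell_3(\ell_{k-1}^2-\ell_{k+1}^2)}{1440d}$; $\mu^1_{22,k}=-\frac{\ell_1^2\ell_2^2\ell_3^2}{1440d^2}$; $\mu^2_{11,k}=\frac{d(\ell_{k-1}^2-\ell_{k+1}^2)\big(4\ell_k^4-(\ell_{k-1}^2-\ell_{k+1}^2)^2-3\ell_k^2(\ell_{k-1}^2+\ell_{k+1}^2)\big)}{2880\,\ell_1\ell_2\ell_3}$; $\mu^2_{12,k}=\mu^2_{21,k}=-\mu^1_{11,k}$; $\mu^2_{22,k}=-\mu^1_{12,k}$. $\mathcal{B}_k(\bm{q})=\sum_{i,j,l=1}^2\mu^i_{jl,k}\mathcal{D}^{jl}_{i,k}(\bm{q})$. *)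

(* Defs.v *)
From Stdlib Require Import Reals.
From Coquelicot Require Import Coquelicot.
Open Scope R_scope.

Definition pt := (R * R)%type.
Definition padd (x y : pt) : pt := (fst x + fst y, snd x + snd y).
Definition pscal (a : R) (x : pt) : pt := (a * fst x, a * snd x).
Definition psub (x y : pt) : pt := (fst x - fst y, snd x - snd y).
Definition dot (x y : pt) : R := fst x * fst y + snd x * snd y.
Definition pnorm (x : pt) : R := sqrt (dot x x).
Definition cross (x y : pt) : R := fst x * snd y - snd x * fst y.

Definition dder (v : pt) (f : pt -> R) (x : pt) : R :=
  Derive (fun s => f (padd x (pscal s v))) 0.
Definition vdder (v : pt) (F : pt -> pt) (x : pt) : pt :=
  (dder v (fun y => fst (F y)) x, dder v (fun y => snd (F y)) x).

Definition nabla_perp (w : pt -> R) (x : pt) : pt :=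
  (- dder (0, 1) w x, dder (1, 0) w x).

Definition is_P1 (f : pt -> R) : Prop :=
  exists a b c, forall x, f x = a + b * fst x + c * snd x.
Definition is_P2 (f : pt -> R) : Prop :=
  exists a0 a1 a2 a3 a4 a5, forall x,
    f x = a0 + a1 * fst x + a2 * snd x
          + a3 * fst x ^ 2 + a4 * fst x * snd x + a5 * snd x ^ 2.
Definition is_RT1 (F : pt -> pt) : Prop :=
  exists v1 v2 v3, is_P1 v1 /\ is_P1 v2 /\ is_P1 v3 /\
    forall x, F x = (v1 x + v3 x * fst x, v2 x + v3 x * snd x).

(** Vertices with indices mod 3: vtx 1 = z1, vtx 2 = z2, vtx 3 = vtx 0 = z3 *)
Definition vtx (z1 z2 z3 : pt) (k : nat) : pt :=
  match Nat.modulo k 3 with 1%nat => z1 | 2%nat => z2 | _ => z3 end.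
(** Edge e_k (opposite z_k) runs from z_{k+1} to z_{k+2} (counterclockwise) *)
Definition estart z1 z2 z3 k := vtx z1 z2 z3 (k + 1).
Definition eend z1 z2 z3 k := vtx z1 z2 z3 (k + 2).
Definition ell z1 z2 z3 k := pnorm (psub (eend z1 z2 z3 k) (estart z1 z2 z3 k)).
Definition tang z1 z2 z3 k : pt :=
  pscal (/ ell z1 z2 z3 k) (psub (eend z1 z2 z3 k) (estart z1 z2 z3 k)).
(** outward unit normal for a counterclockwise triangle *)
Definition nrm z1 z2 z3 k : pt := (snd (tang z1 z2 z3 k), - fst (tang z1 z2 z3 k)).

(** Integrals: edge integral w.r.t. arc length via the affine parametrization,
    triangle integral via the affine map from the reference triangle. *)
Definition seg (a b : pt) (t : R) : pt := padd a (pscal t (psub b a)).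
Definition edge_int (a b : pt) (f : pt -> R) : R :=
  pnorm (psub b a) * RInt (fun t => f (seg a b t)) 0 1.
Definition tri_int (z1 z2 z3 : pt) (f : pt -> R) : R :=
  Rabs (cross (psub z2 z1) (psub z3 z1)) *
  RInt (fun s => RInt (fun t =>
      f (padd z1 (padd (pscal s (psub z2 z1)) (pscal t (psub z3 z1))))) 0 (1 - s)) 0 1.

Definition is_P1_edge (a b : pt) (v : pt -> R) : Prop :=
  exists c0 c1, forall t, v (seg a b t) = c0 + c1 * t.

Section Coefs.
Variables (z1 z2 z3 : pt) (d : R) (k : nat).
Let lk := ell z1 z2 z3 k.
Let lm := ell z1 z2 z3 (k - 1).
Let lp := ell z1 z2 z3 (k + 1).
Let L := ell z1 z2 z3 1 * ell z1 z2 z3 2 * ell z1 z2 z3 3.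
Definition mu1_11 : R :=
  / 5760 * (3 * lk ^ 4 - 3 * (lm ^ 2 - lp ^ 2) ^ 2 - 4 * lk ^ 2 * (lm ^ 2 + lp ^ 2)).
Definition mu1_12 : R := L * (lm ^ 2 - lp ^ 2) / (1440 * d).
Definition mu1_21 : R := mu1_12.
Definition mu1_22 : R := - (L ^ 2 / (1440 * d ^ 2)).
Definition mu2_11 : R :=
  d * (lm ^ 2 - lp ^ 2) *
  (4 * lk ^ 4 - (lm ^ 2 - lp ^ 2) ^ 2 - 3 * lk ^ 2 * (lm ^ 2 + lp ^ 2)) / (2880 * L).
Definition mu2_12 : R := - mu1_11.
Definition mu2_21 : R := mu2_12.
Definition mu2_22 : R := - mu1_12.
End Coefs.

Definition Bop (z1 z2 z3 : pt) (d : R) (k : nat) (q : pt -> pt) (x : pt) : R :=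
  let t := tang z1 z2 z3 k in
  let n := nrm z1 z2 z3 k in
  let Dtt := vdder t (vdder t q) x in
  let Dtn := vdder t (vdder n q) x in
  let Dnt := vdder n (vdder t q) x in
  let Dnn := vdder n (vdder n q) x in
    mu1_11 z1 z2 z3 k * dot t Dtt + mu1_12 z1 z2 z3 d k * dot t Dtn
  + mu1_21 z1 z2 z3 d k * dot t Dnt + mu1_22 z1 z2 z3 d * dot t Dnn
  + mu2_11 z1 z2 z3 d k * dot n Dtt + mu2_12 z1 z2 z3 k * dot n Dtn
  + mu2_21 z1 z2 z3 k * dot n Dnt + mu2_22 z1 z2 z3 d k * dot n Dnn.

Definition rhs_term (z1 z2 z3 : pt) (d : R) (q : pt -> pt) (w : pt -> R) (k : nat) : R :=
  let t := tang z1 z2 z3 k in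
  edge_int (estart z1 z2 z3 k) (eend z1 z2 z3 k)
    (fun x => Bop z1 z2 z3 d k q x * dder t (dder t w) x).

(* Main.v *)
Require Import Defs.
From Stdlib Require Import Reals Lra Psatz FunctionalExtensionality.
From Coquelicot Require Import Coquelicot.
Open Scope R_scope.

Lemma RInt_poly4 (e0 e1 e2 e3 e4 a b : R) :
  RInt (fun x => e0 + e1*x + e2*x^2 + e3*x^3 + e4*x^4) a b =
  (e0*b + e1*b^2/2 + e2*b^3/3 + e3*b^4/4 + e4*b^5/5)
  - (e0*a + e1*a^2/2 + e2*a^3/3 + e3*a^4/4 + e4*a^5/5).
Proof.
  apply is_RInt_unique.
  apply (is_RInt_derive (fun x => e0*x + e1*x^2/2 + e2*x^3/3 + e3*x^4/4 + e4*x^5/5)).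
  - intros x _. auto_derive; [trivial| field].
  - intros x _. refine (ex_derive_continuous (K:=R_AbsRing) (V:=R_NormedModule) _ _ _). auto_derive. trivial.
Qed.

Lemma RInt_poly4_ext (g : R -> R) (e0 e1 e2 e3 e4 a b : R) :
  (forall x, g x = e0 + e1*x + e2*x^2 + e3*x^3 + e4*x^4) ->
  RInt g a b =
  (e0*b + e1*b^2/2 + e2*b^3/3 + e3*b^4/4 + e4*b^5/5)
  - (e0*a + e1*a^2/2 + e2*a^3/3 + e3*a^4/4 + e4*a^5/5).
Proof.
  intro H. rewrite <- RInt_poly4. apply RInt_ext. intros; apply H.
Qed.
Ltac req := match goal with |- ?a = ?b => change (@eq R a b) end.
Definition interp2 (F : R -> R -> R) (s t : R) : R := (- 1*s^3*(F 0 0)/6 + 1*s^3*(F 1 0)/2 - 1*s^3*(F 2 0)/2 + 1*s^3*(F 3 0)/6 - 1*s^2*t*(F 0 0)/2 + 1*s^2*t*(F 0 1)/2 + s^2*t*(F 1 0) - s^2*t*(F 1 1) - 1*s^2*t*(F 2 0)/2 + 1*s^2*t*(F 2 1)/2 + s^2*(F 0 0) - 5*s^2*(F 1 0)/2 + 2*s^2*(F 2 0) - 1*s^2*(F 3 0)/2 - 1*s*t^2*(F 0 0)/2 + s*t^2*(F 0 1) - 1*s*t^2*(F 0 2)/2 + 1*s*t^2*(F 1 0)/2 - s*t^2*(F 1 1) + 1*s*t^2*(F 1 2)/2 + 2*s*t*(F 0 0) - 5*s*t*(F 0 1)/2 + 1*s*t*(F 0 2)/2 - 5*s*t*(F 1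 0)/2 + 3*s*t*(F 1 1) - 1*s*t*(F 1 2)/2 + 1*s*t*(F 2 0)/2 - 1*s*t*(F 2 1)/2 - 11*s*(F 0 0)/6 + 3*s*(F 1 0) - 3*s*(F 2 0)/2 + 1*s*(F 3 0)/3 - 1*t^3*(F 0 0)/6 + 1*t^3*(F 0 1)/2 - 1*t^3*(F 0 2)/2 + 1*t^3*(F 0 3)/6 + t^2*(F 0 0) - 5*t^2*(F 0 1)/2 + 2*t^2*(F 0 2) - 1*t^2*(F 0 3)/2 - 11*t*(F 0 0)/6 + 3*t*(F 0 1) - 3*t*(F 0 2)/2 + 1*t*(F 0 3)/3 + (F 0 0)).
Definition qtri (F : R -> R -> R) : R := (19*(F 0 0)/180 + 19*(F 0 1)/80 - 23*(F 0 2)/240 + 1*(F 0 3)/45 + 19*(F 1 0)/80 + 11*(F 1 1)/120 - 1*(F 1 2)/80 - 23*(F 2 0)/240 - 1*(F 2 1)/80 + 1*(F 3 0)/45).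
Lemma quad2 (F : R -> R -> R) :
  (forall s t, F s t = interp2 F s t) ->
  RInt (fun s => RInt (fun t => F s t) 0 (1 - s)) 0 1 = qtri F.
Proof.
  intro H.
  rewrite (RInt_ext (fun s => RInt (fun t => F s t) 0 (1 - s))
     (fun s => (3*(F 0 0)/8 + 19*(F 0 1)/24 - 5*(F 0 2)/24 + 1*(F 0 3)/24) + (- (F 0 0) - 23*(F 0 1)/12 + 1*(F 0 2)/12 + 23*(F 1 0)/12 + 7*(F 1 1)/6 - 1*(F 1 2)/12 - 5*(F 2 0)/4 - 1*(F 2 1)/4 + 1*(F 3 0)/3) * s + (11*(F 0 0)/12 + 3*(F 0 1)/2 + 1*(F 0 2)/2 - 1*(F 0 3)/12 - 3*(F 1 0) - 5*(F 1 1)/2 + 11*(F 2 0)/4 + 3*(F 2 1)/4 - 5*(F 3 0)/6) * s^2 + (- 1*(F 0 0)/3 - 5*(F 0 1)/12 - 5*(F 0 2)/12 + 5*(F 1 0)/4 + 3*(F 1 1)/2 + 1*(F 1 2)/4 - 7*(F 2 0)/4 - 3*(F 2 1)/4 + 2*(F 3 0)/3) * s^3 + (1*(F 0 0)/24 + 1*(F 0 1)/24 + 1*(F 0 2)/24 + 1*(F 0 3)/24 - 1*(F 1 0)/6 - 1*(F 1 1)/6 - 1*(F 1 2)/6 + 1*(F 2 0)/4 + 1*(F 2 1)/4 - 1*(F 3 0)/6) * s^4)).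
  2:{ intros s _.
      rewrite (RInt_poly4_ext (fun t => F s t) (- 1*s^3*(F 0 0)/6 + 1*s^3*(F 1 0)/2 - 1*s^3*(F 2 0)/2 + 1*s^3*(F 3 0)/6 + s^2*(F 0 0) - 5*s^2*(F 1 0)/2 + 2*s^2*(F 2 0) - 1*s^2*(F 3 0)/2 - 11*s*(F 0 0)/6 + 3*s*(F 1 0) - 3*s*(F 2 0)/2 + 1*s*(F 3 0)/3 + (F 0 0)) (- 1*s^2*(F 0 0)/2 + 1*s^2*(F 0 1)/2 + s^2*(F 1 0) - s^2*(F 1 1) - 1*s^2*(F 2 0)/2 + 1*s^2*(F 2 1)/2 + 2*s*(F 0 0) - 5*s*(F 0 1)/2 + 1*s*(F 0 2)/2 - 5*s*(F 1 0)/2 + 3*s*(F 1 1) - 1*s*(F 1 2)/2 + 1*s*(F 2 0)/2 - 1*s*(F 2 1)/2 - 11*(F 0 0)/6 + 3*(F 0 1) - 3*(F 0 2)/2 + 1*(F 0 3)/3) (- 1*s*(F 0 0)/2 + s*(F 0 1) - 1*s*(F 0 2)/2 + 1*s*(F 1 0)/2 - s*(F 1 1) + 1*s*(F 1 2)/2 + (F 0 0) - 5*(F 0 1)/2 + 2*(F 0 2) - 1*(F 0 3)/2) (- 1*(F 0 0)/6 + 1*(F 0 1)/2 - 1*(F 0 2)/2 + 1*(F 0 3)/6) 0 0 (1 - s)).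
      - req. field.
      - intro t. cbv beta. rewrite (H s t) at 1. unfold interp2. field. }
  rewrite (RInt_poly4_ext _ (3*(F 0 0)/8 + 19*(F 0 1)/24 - 5*(F 0 2)/24 + 1*(F 0 3)/24) (- (F 0 0) - 23*(F 0 1)/12 + 1*(F 0 2)/12 + 23*(F 1 0)/12 + 7*(F 1 1)/6 - 1*(F 1 2)/12 - 5*(F 2 0)/4 - 1*(F 2 1)/4 + 1*(F 3 0)/3) (11*(F 0 0)/12 + 3*(F 0 1)/2 + 1*(F 0 2)/2 - 1*(F 0 3)/12 - 3*(F 1 0) - 5*(F 1 1)/2 + 11*(F 2 0)/4 + 3*(F 2 1)/4 - 5*(F 3 0)/6) (- 1*(F 0 0)/3 - 5*(F 0 1)/12 - 5*(F 0 2)/12 + 5*(F 1 0)/4 + 3*(F 1 1)/2 + 1*(F 1 2)/4 - 7*(F 2 0)/4 - 3*(F 2 1)/4 + 2*(F 3 0)/3) (1*(F 0 0)/24 + 1*(F 0 1)/24 + 1*(F 0 2)/24 + 1*(F 0 3)/24 - 1*(F 1 0)/6 - 1*(F 1 1)/6 - 1*(F 1 2)/6 + 1*(F 2 0)/4 + 1*(F 2 1)/4 - 1*(F 3 0)/6) 0 1).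
  - req. unfold qtri. field.
  - intro s. reflexivity.
Qed.
Definition interp1 (g : R -> R) (t : R) : R :=
  g 0 + (g 1 - g 0) * t + (g 2 - 2 * g 1 + g 0) * (t * (t - 1) / 2)
  + (g 3 - 3 * g 2 + 3 * g 1 - g 0) * (t * (t - 1) * (t - 2) / 6).
Definition q1 (g : R -> R) : R :=
  g 0 + (g 1 - g 0) / 2 - (g 2 - 2 * g 1 + g 0) / 12 + (g 3 - 3 * g 2 + 3 * g 1 - g 0) / 24.
Lemma quad1 (g : R -> R) : (forall t, g t = interp1 g t) -> RInt g 0 1 = q1 g.
Proof.
  intro H.
  rewrite (RInt_poly4_ext g (g 0)
     ((g 1 - g 0) - (g 2 - 2 * g 1 + g 0)/2 + (g 3 - 3 * g 2 + 3 * g 1 - g 0)/3)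
     ((g 2 - 2 * g 1 + g 0)/2 - (g 3 - 3 * g 2 + 3 * g 1 - g 0)/2)
     ((g 3 - 3 * g 2 + 3 * g 1 - g 0)/6) 0 0 1).
  - req. unfold q1. field.
  - intro t. rewrite (H t) at 1. unfold interp1. field.
Qed.

Definition q2f (c0 c1 c2 c3 c4 c5 y1 y2 : R) : R :=
  c0 + c1*y1 + c2*y2 + c3*y1^2 + c4*y1*y2 + c5*y2^2.

Lemma dder_q2 (f : pt -> R) (o1 o2 c0 c1 c2 c3 c4 c5 : R) :
  (forall x, f x = q2f c0 c1 c2 c3 c4 c5 (fst x - o1) (snd x - o2)) ->
  forall v x, dder v f x =
    (c1 + 2*c3*(fst x - o1) + c4*(snd x - o2)) * fst v
    + (c2 + c4*(fst x - o1) + 2*c5*(snd x - o2)) * snd v.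
Proof.
  intros H v x. unfold dder.
  rewrite (Derive_ext _ (fun s => q2f c0 c1 c2 c3 c4 c5 (fst x + s * fst v - o1) (snd x + s * snd v - o2))).
  - apply is_derive_unique. unfold q2f. auto_derive; [trivial|ring].
  - intro s. rewrite H. reflexivity.
Qed.

Lemma dder2_q2 (f : pt -> R) (o1 o2 c0 c1 c2 c3 c4 c5 : R) :
  (forall x, f x = q2f c0 c1 c2 c3 c4 c5 (fst x - o1) (snd x - o2)) ->
  forall u v x, dder u (dder v f) x =
    (2*c3*fst v + c4*snd v) * fst u + (c4*fst v + 2*c5*snd v) * snd u.
Proof.
  intros H u v x.
  rewrite (dder_q2 (dder v f) o1 o2
    (c1 * fst v + c2 * snd v) (2*c3*fst v + c4*snd v) (c4*fst v + 2*c5*snd v) 0 0 0).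
  - ring.
  - intro y. rewrite (dder_q2 f o1 o2 c0 c1 c2 c3 c4 c5 H). unfold q2f. ring.
Qed.

Definition Hq (c3 c4 c5 : R) (u v : pt) : R :=
  2*c3*fst u*fst v + c4*(fst u*snd v + snd u*fst v) + 2*c5*snd u*snd v.

Lemma vdder2_q2 (q : pt -> pt) (o1 o2 c0 c1 c2 c3 c4 c5 r0 r1 r2 r3 r4 r5 : R) :
  (forall x, fst (q x) = q2f c0 c1 c2 c3 c4 c5 (fst x - o1) (snd x - o2)) ->
  (forall x, snd (q x) = q2f r0 r1 r2 r3 r4 r5 (fst x - o1) (snd x - o2)) ->
  forall u v x, vdder u (vdder v q) x = (Hq c3 c4 c5 u v, Hq r3 r4 r5 u v).
Proof.
  intros H1 H2 u v x. unfold vdder. simpl.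
  change (dder u (dder v (fun y => fst (q y))) x, dder u (dder v (fun y => snd (q y))) x)
    with (dder u (dder v (fun y => fst (q y))) x, dder u (dder v (fun y => snd (q y))) x).
  rewrite (dder2_q2 _ o1 o2 c0 c1 c2 c3 c4 c5 H1).
  rewrite (dder2_q2 _ o1 o2 r0 r1 r2 r3 r4 r5 H2).
  unfold Hq. f_equal; ring.
Qed.

Lemma P2_local (f : pt -> R) (o1 o2 : R) : is_P2 f ->
  exists c0 c1 c2 c3 c4 c5, forall x, f x = q2f c0 c1 c2 c3 c4 c5 (fst x - o1) (snd x - o2).
Proof.
  intros [a0 [a1 [a2 [a3 [a4 [a5 H]]]]]].
  exists (a0 + a1*o1 + a2*o2 + a3*o1^2 + a4*o1*o2 + a5*o2^2),
    (a1 + 2*a3*o1 + a4*o2), (a2 + a4*o1 + 2*a5*o2), a3, a4, a5.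
  intro x. rewrite H. unfold q2f. ring.
Qed.

Lemma RT1_local (F : pt -> pt) (o1 o2 : R) : is_RT1 F ->
  exists A0 A1 A2 B0 B1 B2 G1 G2, forall x,
    fst (F x) = A0 + A1*(fst x - o1) + A2*(snd x - o2) + (G1*(fst x - o1) + G2*(snd x - o2))*(fst x - o1) /\
    snd (F x) = B0 + B1*(fst x - o1) + B2*(snd x - o2) + (G1*(fst x - o1) + G2*(snd x - o2))*(snd x - o2).
Proof.
  intros [v1 [v2 [v3 [[a0 [a1 [a2 H1]]] [[b0 [b1 [b2 H2]]] [[g0 [g1 [g2 H3]]] H]]]]]].
  set (G0 := g0 + g1*o1 + g2*o2).
  exists (a0 + a1*o1 + a2*o2 + G0*o1), (a1 + G0 + o1*g1), (a2 + o1*g2),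
    (b0 + b1*o1 + b2*o2 + G0*o2), (b1 + o2*g1), (b2 + G0 + o2*g2), g1, g2.
  intro x. rewrite H. simpl. rewrite H1, H2, H3. unfold G0. split; ring.
Qed.

Definition tpt (z1 z2 z3 : pt) (s t : R) : pt :=
  padd z1 (padd (pscal s (psub z2 z1)) (pscal t (psub z3 z1))).

Definition interp2_6 (F : R -> R -> R) (s t : R) : R := (- s^3*(F 0 0) + 3*s^3*(F 1 0) - 3*s^3*(F 2 0) + s^3*(F 3 0) - 3*s^2*t*(F 0 0) + 3*s^2*t*(F 0 1) + 6*s^2*t*(F 1 0) - 6*s^2*t*(F 1 1) - 3*s^2*t*(F 2 0) + 3*s^2*t*(F 2 1) + 6*s^2*(F 0 0) - 15*s^2*(F 1 0) + 12*s^2*(F 2 0) - 3*s^2*(F 3 0) - 3*s*t^2*(F 0 0) + 6*s*t^2*(F 0 1) - 3*s*t^2*(F 0 2) + 3*s*t^2*(F 1 0) - 6*s*t^2*(F 1 1) + 3*s*t^2*(F 1 2) + 12*s*t*(F 0 0) - 15*s*t*(F 0 1) + 3*s*t*(F 0 2) - 15*s*t*(F 1 0) + 18*s*t*(F 1 1) - 3*s*t*(F 1 2) + 3*s*t*(F 2 0) - 3*s*t*(F 2 1) - 11*s*(F 0 0) + 18*s*(F 1 0) - 9*s*(F 2 0) + 2*s*(F 3 0) - t^3*(F 0 0) + 3*t^3*(F 0 1) - 3*t^3*(F 0 2) + t^3*(F 0 3) + 6*t^2*(F 0 0) - 15*t^2*(F 0 1) + 12*t^2*(F 0 2) - 3*t^2*(F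 0 3) - 11*t*(F 0 0) + 18*t*(F 0 1) - 9*t*(F 0 2) + 2*t*(F 0 3) + 6*(F 0 0)).

Lemma quad2' (F : R -> R -> R) :
  (forall s t, 6 * F s t = interp2_6 F s t) ->
  RInt (fun s => RInt (fun t => F s t) 0 (1 - s)) 0 1 = qtri F.
Proof.
  intro H. apply quad2. intros s t.
  apply (Rmult_eq_reg_l 6); [| lra].
  rewrite H. unfold interp2_6, interp2. field.
Qed.

Lemma tri_int_quad (z1 z2 z3 : pt) (f : pt -> R) :
  (forall s t, 6 * f (tpt z1 z2 z3 s t) = interp2_6 (fun s t => f (tpt z1 z2 z3 s t)) s t) ->
  tri_int z1 z2 z3 f = Rabs (cross (psub z2 z1) (psub z3 z1)) * qtri (fun s t => f (tpt z1 z2 z3 s t)).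
Proof.
  intro H. unfold tri_int. f_equal.
  apply (quad2' (fun s t => f (tpt z1 z2 z3 s t))). exact H.
Qed.

Lemma qtri_720 (F : R -> R -> R) : 720 * qtri F =
  76 * F 0 0 + 171 * F 0 1 - 69 * F 0 2 + 16 * F 0 3 + 171 * F 1 0 + 66 * F 1 1 - 9 * F 1 2
  - 69 * F 2 0 - 9 * F 2 1 + 16 * F 3 0.
Proof. unfold qtri. field. Qed.

Lemma q1_24 (g : R -> R) : 24 * q1 g =
  24 * g 0 + 12 * (g 1 - g 0) - 2 * (g 2 - 2 * g 1 + g 0) + (g 3 - 3 * g 2 + 3 * g 1 - g 0).
Proof. unfold q1. field. Qed.

Lemma sq2_nonneg (a b : R) : 0 <= a*a + b*b.
Proof. nra. Qed.

Lemma Qpos (p1 p2 q1 q2 : R) : 0 < p1*q2 - p2*q1 -> 0 < p1*p1+p2*p2 /\ 0 < q1*q1+q2*q2.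
Proof.
  intro H.
  assert (E : (p1*q2-p2*q1)^2 + (p1*q1+p2*q2)^2 = (p1*p1+p2*p2)*(q1*q1+q2*q2)) by ring.
  assert (h1 : 0 < (p1*q2-p2*q1)^2) by (apply pow_lt; exact H).
  assert (h2 : 0 <= (p1*q1+p2*q2)^2) by (apply pow2_ge_0).
  assert (P0 : 0 <= p1*p1+p2*p2) by (apply sq2_nonneg).
  assert (Q0 : 0 <= q1*q1+q2*q2) by (apply sq2_nonneg).
  assert (h3 : 0 < (p1*p1+p2*p2)*(q1*q1+q2*q2)) by lra.
  split.
  - destruct P0 as [|e]; auto. rewrite <- e in h3. lra.
  - destruct Q0 as [|e]; auto. rewrite <- e in h3. lra.
Qed.

Lemma circ (z1 z2 z3 : pt) (d : R) :
  0 < cross (psub z2 z1) (psub z3 z1) ->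
  (exists c : pt,
          pnorm (psub z2 c) = pnorm (psub z1 c) /\
          pnorm (psub z3 c) = pnorm (psub z1 c) /\
          d = 2 * pnorm (psub z1 c)) ->
  ell z1 z2 z3 1 * ell z1 z2 z3 2 * ell z1 z2 z3 3 = d * cross (psub z2 z1) (psub z3 z1) /\ 0 < d.
Proof.
  destruct z1 as [o1 o2], z2 as [x2 y2], z3 as [x3 y3].
  intros Hc [[c1 c2] [h2 [h3 hd]]].
  unfold ell, estart, eend, vtx. simpl Nat.modulo. cbv iota.
  unfold pnorm, dot, psub, cross in *. simpl in *.
  set (a1 := x2 - o1) in *. set (a2 := y2 - o2) in *.
  set (b1 := x3 - o1) in *. set (b2 := y3 - o2) in *.
  set (u1 := c1 - o1). set (u2 := c2 - o2).
  set (E1 := (o1 - c1) * (o1 - c1) + (o2 - c2) * (o2 - c2)) in *.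
  assert (hE1 : 0 <= E1) by (apply sq2_nonneg).
  assert (h2' : 0 <= (x2 - c1) * (x2 - c1) + (y2 - c2) * (y2 - c2)) by (apply sq2_nonneg).
  assert (h3' : 0 <= (x3 - c1) * (x3 - c1) + (y3 - c2) * (y3 - c2)) by (apply sq2_nonneg).
  apply (sqrt_inj _ _ h2' hE1) in h2.
  apply (sqrt_inj _ _ h3' hE1) in h3.
  assert (k1 : a1*u1 + a2*u2 = (a1*a1 + a2*a2)/2).
  { unfold a1, a2, u1, u2. unfold E1 in h2.
    apply Rminus_diag_uniq.
    replace ((x2 - o1) * (c1 - o1) + (y2 - o2) * (c2 - o2) - ((x2 - o1) * (x2 - o1) + (y2 - o2) * (y2 - o2)) / 2)
      with (((x2 - c1) * (x2 - c1) + (y2 - c2) * (y2 - c2) - ((o1 - c1) * (o1 - c1) + (o2 - c2) * (o2 - c2)))/ -2) by field.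
    rewrite h2. field. }
  assert (k2 : b1*u1 + b2*u2 = (b1*b1 + b2*b2)/2).
  { unfold b1, b2, u1, u2. unfold E1 in h3.
    apply Rminus_diag_uniq.
    replace ((x3 - o1) * (c1 - o1) + (y3 - o2) * (c2 - o2) - ((x3 - o1) * (x3 - o1) + (y3 - o2) * (y3 - o2)) / 2)
      with (((x3 - c1) * (x3 - c1) + (y3 - c2) * (y3 - c2) - ((o1 - c1) * (o1 - c1) + (o2 - c2) * (o2 - c2)))/ -2) by field.
    rewrite h3. field. }
  set (cr := a1 * b2 - a2 * b1) in *.
  assert (e1 : cr * u1 = (a1*u1 + a2*u2) * b2 - (b1*u1 + b2*u2) * a2) by (unfold cr; ring).
  assert (e2 : cr * u2 = a1 * (b1*u1 + b2*u2) - b1 * (a1*u1 + a2*u2)) by (unfold cr; ring).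
  rewrite k1, k2 in e1, e2.
  assert (eE : E1 = u1*u1 + u2*u2) by (unfold E1, u1, u2; ring).
  assert (key : ((x3 - x2) * (x3 - x2) + (y3 - y2) * (y3 - y2)) * ((o1 - x3) * (o1 - x3) + (o2 - y3) * (o2 - y3))
                * (a1 * a1 + a2 * a2) = (2*cr)^2 * E1).
  { rewrite eE.
    replace ((2*cr)^2 * (u1*u1 + u2*u2)) with (4 * ((cr*u1)^2 + (cr*u2)^2)) by ring.
    rewrite e1, e2. unfold a1, a2, b1, b2. field. }
  rewrite <- !sqrt_mult by (try apply sq2_nonneg; apply Rmult_le_pos; apply sq2_nonneg).
  rewrite key, sqrt_mult by (try apply pow2_ge_0; assumption).
  rewrite sqrt_pow2 by lra.
  subst d. split; [ring|].
  assert (0 < E1).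
  { destruct hE1 as [|h0]; auto. exfalso.
    assert (pos : 0 < ((x3 - x2) * (x3 - x2) + (y3 - y2) * (y3 - y2)) * ((o1 - x3) * (o1 - x3) + (o2 - y3) * (o2 - y3))
                * (a1 * a1 + a2 * a2)).
    { destruct (Qpos (x3-x2) (y3-y2) (o1-x2) (o2-y2)) as [HA _].
      { replace ((x3 - x2) * (o2 - y2) - (y3 - y2) * (o1 - x2)) with cr by (unfold cr, a1, a2, b1, b2; ring). exact Hc. }
      destruct (Qpos a1 a2 b1 b2 Hc) as [HB HC].
      replace ((o1 - x3) * (o1 - x3) + (o2 - y3) * (o2 - y3)) with (b1*b1+b2*b2) by (unfold b1, b2; ring).
      apply Rmult_lt_0_compat; [apply Rmult_lt_0_compat|]; assumption. }
    rewrite key, <- h0 in pos. lra. }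
  apply Rmult_lt_0_compat; [lra| apply sqrt_lt_R0; lra].
Qed.

Definition Dl z1 z2 z3 k := psub (eend z1 z2 z3 k) (estart z1 z2 z3 k).
Definition Qd z1 z2 z3 k := dot (Dl z1 z2 z3 k) (Dl z1 z2 z3 k).
Definition rot (u : pt) : pt := (snd u, - fst u).
Definition trif (c3 c4 c5 r3 r4 r5 : R) (u x y : pt) : R :=
  fst u * Hq c3 c4 c5 x y + snd u * Hq r3 r4 r5 x y.

Lemma Qd_nonneg z1 z2 z3 k : 0 <= Qd z1 z2 z3 k.
Proof. unfold Qd, dot. apply sq2_nonneg. Qed.

Lemma ell_sq z1 z2 z3 k : ell z1 z2 z3 k ^ 2 = Qd z1 z2 z3 k.
Proof. unfold ell, pnorm. apply pow2_sqrt. apply Qd_nonneg. Qed.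

Lemma edge_int_const (a b : pt) (f : pt -> R) (c : R) :
  (forall x, f x = c) -> edge_int a b f = pnorm (psub b a) * c.
Proof.
  intro H. unfold edge_int. f_equal.
  rewrite (RInt_ext _ (fun _ => c)).
  - rewrite RInt_const. unfold scal; simpl; unfold mult; simpl. ring.
  - intros; apply H.
Qed.

Lemma rhs_gen (z1 z2 z3 : pt) (d : R) (p2 : pt -> pt) (w2 : pt -> R) (k : nat)
  (o1 o2 c0 c1 c2 c3 c4 c5 r0 r1 r2 r3 r4 r5 w0 w1 w3 w4 w5 w6 : R) :
  (forall x, fst (p2 x) = q2f c0 c1 c2 c3 c4 c5 (fst x - o1) (snd x - o2)) ->
  (forall x, snd (p2 x) = q2f r0 r1 r2 r3 r4 r5 (fst x - o1) (snd x - o2)) ->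
  (forall x, w2 x = q2f w0 w1 w3 w4 w5 w6 (fst x - o1) (snd x - o2)) ->
  ell z1 z2 z3 1 * ell z1 z2 z3 2 * ell z1 z2 z3 3 = d * cross (psub z2 z1) (psub z3 z1) ->
  0 < d -> 0 < cross (psub z2 z1) (psub z3 z1) -> 0 < Qd z1 z2 z3 k ->
  rhs_term z1 z2 z3 d p2 w2 k =
  (let cr := cross (psub z2 z1) (psub z3 z1) in
   let D := Dl z1 z2 z3 k in let N := rot D in
   let Qk := Qd z1 z2 z3 k in let Qm := Qd z1 z2 z3 (k - 1) in let Qp := Qd z1 z2 z3 (k + 1) in
   let M111 := 3*Qk^2 - 3*(Qm - Qp)^2 - 4*Qk*(Qm + Qp) in
   let tr := trif c3 c4 c5 r3 r4 r5 in
   ((cr * (M111 * tr D D D + 4*cr*(Qm - Qp) * (tr D D N + tr D N D) - 4*cr^2 * tr D N N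
           - M111 * (tr N D N + tr N N D) - 4*cr*(Qm - Qp) * tr N N N)
     + 2*(Qm - Qp)*(4*Qk^2 - (Qm - Qp)^2 - 3*Qk*(Qm + Qp)) * tr N D D)
    * Hq w4 w5 w6 D D) / (5760 * cr * Qk^2)).
Proof.
  intros Hp1 Hp2 Hw HL Hd Hc HQ.
  unfold rhs_term.
  erewrite edge_int_const.
  2:{ intro x. unfold Bop. cbv zeta.
      rewrite !(vdder2_q2 p2 o1 o2 c0 c1 c2 c3 c4 c5 r0 r1 r2 r3 r4 r5 Hp1 Hp2).
      rewrite (dder2_q2 w2 o1 o2 w0 w1 w3 w4 w5 w6 Hw).
      reflexivity. }
  assert (Em111 : mu1_11 z1 z2 z3 k = (3*Qd z1 z2 z3 k^2 - 3*(Qd z1 z2 z3 (k-1) - Qd z1 z2 z3 (k+1))^2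
                   - 4*Qd z1 z2 z3 k*(Qd z1 z2 z3 (k-1) + Qd z1 z2 z3 (k+1)))/5760).
  { unfold mu1_11. replace (ell z1 z2 z3 k ^ 4) with ((ell z1 z2 z3 k ^ 2)^2) by ring.
    rewrite !ell_sq. field. }
  assert (Em112 : mu1_12 z1 z2 z3 d k = cross (psub z2 z1) (psub z3 z1) * (Qd z1 z2 z3 (k-1) - Qd z1 z2 z3 (k+1))/1440).
  { unfold mu1_12. rewrite HL, !ell_sq. field. lra. }
  assert (Em122 : mu1_22 z1 z2 z3 d = - cross (psub z2 z1) (psub z3 z1)^2/1440).
  { unfold mu1_22. rewrite HL. field. lra. }
  assert (Em211 : mu2_11 z1 z2 z3 d k = (Qd z1 z2 z3 (k-1) - Qd z1 z2 z3 (k+1))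
        * (4*Qd z1 z2 z3 k^2 - (Qd z1 z2 z3 (k-1) - Qd z1 z2 z3 (k+1))^2
           - 3*Qd z1 z2 z3 k*(Qd z1 z2 z3 (k-1) + Qd z1 z2 z3 (k+1)))/(2880 * cross (psub z2 z1) (psub z3 z1))).
  { unfold mu2_11. rewrite HL.
    replace (ell z1 z2 z3 k ^ 4) with ((ell z1 z2 z3 k ^ 2)^2) by ring.
    rewrite !ell_sq. field. split; lra. }
  unfold mu2_21, mu2_22, mu1_21. unfold mu2_12.
  rewrite Em111, Em112, Em122, Em211.
  change (pnorm (psub (eend z1 z2 z3 k) (estart z1 z2 z3 k))) with (ell z1 z2 z3 k).
  unfold nrm, tang.
  change (psub (eend z1 z2 z3 k) (estart z1 z2 z3 k)) with (Dl z1 z2 z3 k).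
  rewrite <- (ell_sq z1 z2 z3 k).
  assert (Hs : 0 < ell z1 z2 z3 k).
  { unfold ell, pnorm. apply sqrt_lt_R0. exact HQ. }
  cbv zeta. unfold trif, rot, Hq, pscal, dot. cbn [fst snd].
  generalize (ell z1 z2 z3 k) Hs. intros s Hs'.
  req. field. split; lra.
Qed.

Lemma dot_pscal u c v : dot u (pscal c v) = c * dot u v.
Proof. unfold dot, pscal; simpl; ring. Qed.

Lemma q1_scal (g h : R -> R) (c : R) : (forall t, g t = c * h t) -> q1 g = c * q1 h.
Proof. intro H. unfold q1. rewrite !H. field. Qed.

Lemma edge_hyps (z1 z2 z3 : pt) (p2 Pi : pt -> pt) (k : nat)
  (o1 o2 c0 c1 c2 c3 c4 c5 r0 r1 r2 r3 r4 r5 A0 A1 A2 B0 B1 B2 G1 G2 : R) :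
  (forall x, fst (p2 x) = q2f c0 c1 c2 c3 c4 c5 (fst x - o1) (snd x - o2)) ->
  (forall x, snd (p2 x) = q2f r0 r1 r2 r3 r4 r5 (fst x - o1) (snd x - o2)) ->
  (forall x, fst (Pi x) = A0 + A1*(fst x - o1) + A2*(snd x - o2) + (G1*(fst x - o1) + G2*(snd x - o2))*(fst x - o1)) ->
  (forall x, snd (Pi x) = B0 + B1*(fst x - o1) + B2*(snd x - o2) + (G1*(fst x - o1) + G2*(snd x - o2))*(snd x - o2)) ->
  0 < Qd z1 z2 z3 k ->
  (forall v : pt -> R, is_P1_edge (estart z1 z2 z3 k) (eend z1 z2 z3 k) v ->
     edge_int (estart z1 z2 z3 k) (eend z1 z2 z3 k)
       (fun x => dot (psub (p2 x) (Pi x)) (nrm z1 z2 z3 k) * v x) = 0) ->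
  q1 (fun t => dot (psub (p2 (seg (estart z1 z2 z3 k) (eend z1 z2 z3 k) t))
                         (Pi (seg (estart z1 z2 z3 k) (eend z1 z2 z3 k) t))) (rot (Dl z1 z2 z3 k))) = 0 /\
  q1 (fun t => dot (psub (p2 (seg (estart z1 z2 z3 k) (eend z1 z2 z3 k) t))
                         (Pi (seg (estart z1 z2 z3 k) (eend z1 z2 z3 k) t))) (rot (Dl z1 z2 z3 k)) * t) = 0.
Proof.
  intros Hp1 Hp2 HP1 HP2 HQ Hk.
  assert (Hs : 0 < ell z1 z2 z3 k) by (unfold ell, pnorm; apply sqrt_lt_R0; exact HQ).
  assert (HQ' : Qd z1 z2 z3 k <> 0) by lra.
  assert (Hs' : ell z1 z2 z3 k <> 0) by lra.
  set (a := estart z1 z2 z3 k) in *. set (b := eend z1 z2 z3 k) in *.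
  assert (Hnrm : nrm z1 z2 z3 k = pscal (/ ell z1 z2 z3 k) (rot (Dl z1 z2 z3 k))).
  { unfold nrm, tang, rot, pscal. simpl. f_equal. ring. }
  assert (Hpt : forall t, dot (psub (p2 (seg a b t)) (Pi (seg a b t))) (rot (Dl z1 z2 z3 k)) =
     (q2f c0 c1 c2 c3 c4 c5 (fst a + t * (fst b - fst a) - o1) (snd a + t * (snd b - snd a) - o2)
      - (A0 + A1*(fst a + t * (fst b - fst a) - o1) + A2*(snd a + t * (snd b - snd a) - o2)
         + (G1*(fst a + t * (fst b - fst a) - o1) + G2*(snd a + t * (snd b - snd a) - o2))*(fst a + t * (fst b - fst a) - o1))) * (snd b - snd a)
     - (q2f r0 r1 r2 r3 r4 r5 (fst a + t * (fst b - fst a) - o1) (snd a + t * (snd b - snd a) - o2)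
      - (B0 + B1*(fst a + t * (fst b - fst a) - o1) + B2*(snd a + t * (snd b - snd a) - o2)
         + (G1*(fst a + t * (fst b - fst a) - o1) + G2*(snd a + t * (snd b - snd a) - o2))*(snd a + t * (snd b - snd a) - o2))) * (fst b - fst a)).
  { intro t. unfold dot, psub. cbn [fst snd]. rewrite Hp1, Hp2, HP1, HP2.
    unfold Dl. fold a b. unfold seg, padd, pscal, psub, rot. cbn [fst snd]. ring. }
  split.
  - assert (H1 := Hk (fun _ => 1) ltac:(exists 1, 0; intro; ring)).
    unfold edge_int in H1.
    change (pnorm (psub b a)) with (ell z1 z2 z3 k) in H1.
    apply Rmult_integral in H1. destruct H1 as [H1|H1]; [lra|].
    rewrite quad1 in H1.
    + rewrite (q1_scal _ (fun t => dot (psub (p2 (seg a b t)) (Pi (seg a b t))) (rot (Dl z1 z2 z3 k))) (/ ell z1 z2 z3 k)) in H1.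
      * apply Rmult_integral in H1. destruct H1 as [H1|H1]; auto.
        exfalso. apply (Rinv_neq_0_compat _ Hs' H1).
      * intro t. rewrite Hnrm. unfold dot, pscal. cbn [fst snd]. ring.
    + intro t. unfold interp1. rewrite Hnrm, !dot_pscal.
      rewrite !Hpt. unfold q2f. field. exact Hs'.
  - assert (H1 := Hk (fun x => dot (psub x a) (Dl z1 z2 z3 k) / Qd z1 z2 z3 k)).
    assert (Hv : forall t, dot (psub (seg a b t) a) (Dl z1 z2 z3 k) / Qd z1 z2 z3 k = t).
    { intro t. assert (HQ2 := HQ'). unfold Qd, Dl in HQ2 |- *. fold a b in HQ2 |- *. unfold seg, dot, psub, padd, pscal in HQ2 |- *. cbn [fst snd] in HQ2 |- *. field. exact HQ2. }
    specialize (H1 ltac:(exists 0, 1; intro t; rewrite Hv; ring)).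
    unfold edge_int in H1.
    change (pnorm (psub b a)) with (ell z1 z2 z3 k) in H1.
    apply Rmult_integral in H1. destruct H1 as [H1|H1]; [lra|].
    rewrite quad1 in H1.
    + rewrite (q1_scal _ (fun t => dot (psub (p2 (seg a b t)) (Pi (seg a b t))) (rot (Dl z1 z2 z3 k)) * t) (/ ell z1 z2 z3 k)) in H1.
      * apply Rmult_integral in H1. destruct H1 as [H1|H1]; auto.
        exfalso. apply (Rinv_neq_0_compat _ Hs' H1).
      * intro t. rewrite Hnrm, Hv. unfold dot, pscal. cbn [fst snd]. ring.
    + intro t. unfold interp1. rewrite !Hv. rewrite Hnrm, !dot_pscal.
      rewrite !Hpt. unfold q2f. field. exact Hs'.
Qed.

Lemma VU_lemma (V U H cr Q : R) : cr <> 0 -> Q <> 0 -> V = 8 * U * Q^2 ->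
  V * H / (5760 * cr * Q^2) = U * H / (720 * cr).
Proof. intros h1 h2 E. rewrite E. field. auto. Qed.

Lemma Qpos' (p1 p2 q1 q2 X : R) : 0 < p1*q2 - p2*q1 -> X = p1*p1 + p2*p2 -> 0 < X.
Proof. intros H E. rewrite E. exact (proj1 (Qpos p1 p2 q1 q2 H)). Qed.

Lemma int_hyp (z1 z2 z3 : pt) (f : pt -> R) :
  (forall s t, 6 * f (tpt z1 z2 z3 s t) = interp2_6 (fun s t => f (tpt z1 z2 z3 s t)) s t) ->
  0 < cross (psub z2 z1) (psub z3 z1) -> tri_int z1 z2 z3 f = 0 ->
  qtri (fun s t => f (tpt z1 z2 z3 s t)) = 0.
Proof.
  intros H Hc E. rewrite tri_int_quad in E by exact H.
  rewrite Rabs_pos_eq in E by lra.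
  apply Rmult_integral in E. destruct E as [E|E]; [lra|exact E].
Qed.

Definition ILs (a1 a2 b1 b2 cP0 cP1 cP2 cP3 cP4 cP5 cR0 cR1 cR2 cR3 cR4 cR5 cW0 cW1 cW2 cW3 cW4 cW5 A0 A1 A2 B0 B1 B2 G1 G2 : R) : R :=
  (- 36*a1^3*cP3*cW4 + 72*a1^3*cR3*cW3 + 36*a1^3*cW4*G1 - 72*a1^2*a2*cP3*cW5 - 36*a1^2*a2*cP4*cW4 + 36*a1^2*a2*cR3*cW4 + 72*a1^2*a2*cR4*cW3 - 72*a1^2*a2*cW3*G1 + 36*a1^2*a2*cW4*G2 + 72*a1^2*a2*cW5*G1 - 36*a1^2*b1*cP3*cW4 + 72*a1^2*b1*cR3*cW3 + 36*a1^2*b1*cW4*G1 - 24*a1^2*b2*cP3*cW5 - 12*a1^2*b2*cP4*cW4 + 12*a1^2*b2*cR3*cW4 + 24*a1^2*b2*cR4*cW3 - 24*a1^2*b2*cW3*G1 + 12*a1^2*b2*cW4*G2 + 24*a1^2*b2*cW5*G1 - 60*a1^2*cP1*cW4 - 60*a1^2*cP3*cW2 + 120*a1^2*cR1*cW3 + 60*a1^2*cR3*cW1 + 60*a1^2*cW2*G1 - 120*a1^2*cW3*B1 + 60*a1^2*cW4*A1 - 72*a1*a2^2*cP4*cW5 - 36*a1*a2^2*cP5*cW4 + 36*a1*a2^2*cR4*cW4 + 72*a1*a2^2*cR5*cW3 - 72*a1*a2^2*cW3*G2 - 36*a1*a2^2*cW4*G1 + 72*a1*a2^2*cW5*G2 -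 48*a1*a2*b1*cP3*cW5 - 24*a1*a2*b1*cP4*cW4 + 24*a1*a2*b1*cR3*cW4 + 48*a1*a2*b1*cR4*cW3 - 48*a1*a2*b1*cW3*G1 + 24*a1*a2*b1*cW4*G2 + 48*a1*a2*b1*cW5*G1 - 48*a1*a2*b2*cP4*cW5 - 24*a1*a2*b2*cP5*cW4 + 24*a1*a2*b2*cR4*cW4 + 48*a1*a2*b2*cR5*cW3 - 48*a1*a2*b2*cW3*G2 - 24*a1*a2*b2*cW4*G1 + 48*a1*a2*b2*cW5*G2 - 120*a1*a2*cP1*cW5 - 60*a1*a2*cP2*cW4 - 60*a1*a2*cP4*cW2 + 60*a1*a2*cR1*cW4 + 120*a1*a2*cR2*cW3 + 60*a1*a2*cR4*cW1 - 60*a1*a2*cW1*G1 + 60*a1*a2*cW2*G2 - 120*a1*a2*cW3*B2 + 60*a1*a2*cW4*A2 - 60*a1*a2*cW4*B1 + 120*a1*a2*cW5*A1 - 36*a1*b1^2*cP3*cW4 + 72*a1*b1^2*cR3*cW3 + 36*a1*b1^2*cW4*G1 - 48*a1*b1*b2*cP3*cW5 - 24*a1*b1*b2*cP4*cW4 + 24*a1*b1*b2*cR3*cW4 + 48*a1*b1*b2*cR4*cW3 - 48*a1*b1*b2*cW3*G1 + 24*a1*b1*b2*cW4*G2 + 48*a1*b1*b2*cW5*G1 - 60*a1*b1*cP1*cW4 - 60*a1*b1*cP3*cW2 + 120*a1*b1*cR1*cW3 + 60*a1*b1*cR3*cW1 + 60*a1*b1*cW2*G1 - 120*a1*b1*cW3*B1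 + 60*a1*b1*cW4*A1 - 24*a1*b2^2*cP4*cW5 - 12*a1*b2^2*cP5*cW4 + 12*a1*b2^2*cR4*cW4 + 24*a1*b2^2*cR5*cW3 - 24*a1*b2^2*cW3*G2 - 12*a1*b2^2*cW4*G1 + 24*a1*b2^2*cW5*G2 - 60*a1*b2*cP1*cW5 - 30*a1*b2*cP2*cW4 - 30*a1*b2*cP4*cW2 + 30*a1*b2*cR1*cW4 + 60*a1*b2*cR2*cW3 + 30*a1*b2*cR4*cW1 - 30*a1*b2*cW1*G1 + 30*a1*b2*cW2*G2 - 60*a1*b2*cW3*B2 + 30*a1*b2*cW4*A2 - 30*a1*b2*cW4*B1 + 60*a1*b2*cW5*A1 - 120*a1*cP0*cW4 - 120*a1*cP1*cW2 + 240*a1*cR0*cW3 + 120*a1*cR1*cW1 - 120*a1*cW1*B1 + 120*a1*cW2*A1 - 240*a1*cW3*B0 + 120*a1*cW4*A0 - 72*a2^3*cP5*cW5 + 36*a2^3*cR5*cW4 - 36*a2^3*cW4*G2 - 24*a2^2*b1*cP4*cW5 - 12*a2^2*b1*cP5*cW4 + 12*a2^2*b1*cR4*cW4 + 24*a2^2*b1*cR5*cW3 - 24*a2^2*b1*cW3*G2 - 12*a2^2*b1*cW4*G1 + 24*a2^2*b1*cW5*G2 - 72*a2^2*b2*cP5*cW5 + 36*a2^2*b2*cR5*cW4 - 36*a2^2*b2*cW4*G2 - 120*a2^2*cP2*cW5 - 60*a2^2*cP5*cW2 + 60*a2^2*cR2*cW4 + 60*a2^2*cR5*cW1 - 60*a2^2*cW1*G2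 - 60*a2^2*cW4*B2 + 120*a2^2*cW5*A2 - 24*a2*b1^2*cP3*cW5 - 12*a2*b1^2*cP4*cW4 + 12*a2*b1^2*cR3*cW4 + 24*a2*b1^2*cR4*cW3 - 24*a2*b1^2*cW3*G1 + 12*a2*b1^2*cW4*G2 + 24*a2*b1^2*cW5*G1 - 48*a2*b1*b2*cP4*cW5 - 24*a2*b1*b2*cP5*cW4 + 24*a2*b1*b2*cR4*cW4 + 48*a2*b1*b2*cR5*cW3 - 48*a2*b1*b2*cW3*G2 - 24*a2*b1*b2*cW4*G1 + 48*a2*b1*b2*cW5*G2 - 60*a2*b1*cP1*cW5 - 30*a2*b1*cP2*cW4 - 30*a2*b1*cP4*cW2 + 30*a2*b1*cR1*cW4 + 60*a2*b1*cR2*cW3 + 30*a2*b1*cR4*cW1 - 30*a2*b1*cW1*G1 + 30*a2*b1*cW2*G2 - 60*a2*b1*cW3*B2 + 30*a2*b1*cW4*A2 - 30*a2*b1*cW4*B1 + 60*a2*b1*cW5*A1 - 72*a2*b2^2*cP5*cW5 + 36*a2*b2^2*cR5*cW4 - 36*a2*b2^2*cW4*G2 - 120*a2*b2*cP2*cW5 - 60*a2*b2*cP5*cW2 + 60*a2*b2*cR2*cW4 + 60*a2*b2*cR5*cW1 - 60*a2*b2*cW1*G2 - 60*a2*b2*cW4*B2 + 120*a2*b2*cW5*A2 - 240*a2*cP0*cW5 - 120*a2*cP2*cW2 + 120*a2*cR0*cW4 + 120*a2*cR2*cW1 - 120*a2*cW1*B2 + 120*a2*cW2*A2 - 120*a2*cW4*B0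 + 240*a2*cW5*A0 - 36*b1^3*cP3*cW4 + 72*b1^3*cR3*cW3 + 36*b1^3*cW4*G1 - 72*b1^2*b2*cP3*cW5 - 36*b1^2*b2*cP4*cW4 + 36*b1^2*b2*cR3*cW4 + 72*b1^2*b2*cR4*cW3 - 72*b1^2*b2*cW3*G1 + 36*b1^2*b2*cW4*G2 + 72*b1^2*b2*cW5*G1 - 60*b1^2*cP1*cW4 - 60*b1^2*cP3*cW2 + 120*b1^2*cR1*cW3 + 60*b1^2*cR3*cW1 + 60*b1^2*cW2*G1 - 120*b1^2*cW3*B1 + 60*b1^2*cW4*A1 - 72*b1*b2^2*cP4*cW5 - 36*b1*b2^2*cP5*cW4 + 36*b1*b2^2*cR4*cW4 + 72*b1*b2^2*cR5*cW3 - 72*b1*b2^2*cW3*G2 - 36*b1*b2^2*cW4*G1 + 72*b1*b2^2*cW5*G2 - 120*b1*b2*cP1*cW5 - 60*b1*b2*cP2*cW4 - 60*b1*b2*cP4*cW2 + 60*b1*b2*cR1*cW4 + 120*b1*b2*cR2*cW3 + 60*b1*b2*cR4*cW1 - 60*b1*b2*cW1*G1 + 60*b1*b2*cW2*G2 - 120*b1*b2*cW3*B2 + 60*b1*b2*cW4*A2 - 60*b1*b2*cW4*B1 + 120*b1*b2*cW5*A1 - 120*b1*cP0*cW4 - 120*b1*cP1*cW2 + 240*b1*cR0*cW3 + 120*b1*cR1*cW1 - 120*b1*cW1*B1 + 120*b1*cW2*A1 - 240*b1*cW3*B0 + 120*b1*cW4*A0 - 72*b2^3*cP5*cW5 + 36*b2^3*cR5*cW4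 - 36*b2^3*cW4*G2 - 120*b2^2*cP2*cW5 - 60*b2^2*cP5*cW2 + 60*b2^2*cR2*cW4 + 60*b2^2*cR5*cW1 - 60*b2^2*cW1*G2 - 60*b2^2*cW4*B2 + 120*b2^2*cW5*A2 - 240*b2*cP0*cW5 - 120*b2*cP2*cW2 + 120*b2*cR0*cW4 + 120*b2*cR2*cW1 - 120*b2*cW1*B2 + 120*b2*cW2*A2 - 120*b2*cW4*B0 + 240*b2*cW5*A0 - 360*cP0*cW2 + 360*cR0*cW1 - 360*cW1*B0 + 360*cW2*A0).
Definition Ds0 (a1 a2 b1 b2 cP0 cP1 cP2 cP3 cP4 cP5 cR0 cR1 cR2 cR3 cR4 cR5 cW0 cW1 cW2 cW3 cW4 cW5 A0 A1 A2 B0 B1 B2 G1 G2 : R) : R :=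
  (8*a1^3*cR3 - 8*a1^2*a2*cP3 + 8*a1^2*a2*cR4 + 8*a1^2*b2*cP3 + 4*a1^2*b2*cR4 - 12*a1^2*b2*G1 + 12*a1^2*cR1 - 12*a1^2*B1 - 8*a1*a2^2*cP4 + 8*a1*a2^2*cR5 - 8*a1*a2*b1*cP3 - 4*a1*a2*b1*cR4 + 12*a1*a2*b1*G1 + 4*a1*a2*b2*cP4 + 8*a1*a2*b2*cR5 - 12*a1*a2*b2*G2 - 12*a1*a2*cP1 + 12*a1*a2*cR2 + 12*a1*a2*A1 - 12*a1*a2*B2 + 8*a1*b1*b2*cP3 + 4*a1*b1*b2*cR4 - 12*a1*b1*b2*G1 + 4*a1*b2^2*cP4 + 8*a1*b2^2*cR5 - 12*a1*b2^2*G2 + 12*a1*b2*cP1 + 12*a1*b2*cR2 - 12*a1*b2*A1 - 12*a1*b2*B2 + 24*a1*cR0 - 24*a1*B0 - 8*a2^3*cP5 - 4*a2^2*b1*cP4 - 8*a2^2*b1*cR5 + 12*a2^2*b1*G2 - 12*a2^2*cP2 + 12*a2^2*A2 - 8*a2*b1^2*cP3 - 4*a2*b1^2*cR4 + 12*a2*b1^2*G1 - 4*a2*b1*b2*cP4 - 8*a2*b1*b2*cR5 + 12*a2*b1*b2*G2 - 12*a2*b1*cP1 - 12*a2*b1*cR2 + 12*a2*b1*A1 + 12*a2*b1*B2 - 24*a2*cP0 + 24*a2*A0 - 8*b1^3*cR3 + 8*b1^2*b2*cP3 - 8*b1^2*b2*cR4 - 12*b1^2*cR1 + 12*b1^2*B1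 + 8*b1*b2^2*cP4 - 8*b1*b2^2*cR5 + 12*b1*b2*cP1 - 12*b1*b2*cR2 - 12*b1*b2*A1 + 12*b1*b2*B2 - 24*b1*cR0 + 24*b1*B0 + 8*b2^3*cP5 + 12*b2^2*cP2 - 12*b2^2*A2 + 24*b2*cP0 - 24*b2*A0).
Definition Ds1 (a1 a2 b1 b2 cP0 cP1 cP2 cP3 cP4 cP5 cR0 cR1 cR2 cR3 cR4 cR5 cW0 cW1 cW2 cW3 cW4 cW5 A0 A1 A2 B0 B1 B2 G1 G2 : R) : R :=
  (2*a1^3*cR3 - 2*a1^2*a2*cP3 + 2*a1^2*a2*cR4 + 2*a1^2*b1*cR3 + 2*a1^2*b2*cP3 + 2*a1^2*b2*cR4 - 4*a1^2*b2*G1 + 4*a1^2*cR1 - 4*a1^2*B1 - 2*a1*a2^2*cP4 + 2*a1*a2^2*cR5 - 4*a1*a2*b1*cP3 + 4*a1*a2*b1*G1 + 4*a1*a2*b2*cR5 - 4*a1*a2*b2*G2 - 4*a1*a2*cP1 + 4*a1*a2*cR2 + 4*a1*a2*A1 - 4*a1*a2*B2 + 2*a1*b1^2*cR3 + 4*a1*b1*b2*cP3 + 4*a1*b1*b2*cR4 - 8*a1*b1*b2*G1 + 4*a1*b1*cR1 - 4*a1*b1*B1 + 2*a1*b2^2*cP4 + 6*a1*b2^2*cR5 - 8*a1*b2^2*G2 + 4*a1*b2*cP1 + 8*a1*b2*cR2 - 4*a1*b2*A1 - 8*a1*b2*B2 + 12*a1*cR0 - 12*a1*B0 - 2*a2^3*cP5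 - 2*a2^2*b1*cP4 - 2*a2^2*b1*cR5 + 4*a2^2*b1*G2 - 2*a2^2*b2*cP5 - 4*a2^2*cP2 + 4*a2^2*A2 - 6*a2*b1^2*cP3 - 2*a2*b1^2*cR4 + 8*a2*b1^2*G1 - 4*a2*b1*b2*cP4 - 4*a2*b1*b2*cR5 + 8*a2*b1*b2*G2 - 8*a2*b1*cP1 - 4*a2*b1*cR2 + 8*a2*b1*A1 + 4*a2*b1*B2 - 2*a2*b2^2*cP5 - 4*a2*b2*cP2 + 4*a2*b2*A2 - 12*a2*cP0 + 12*a2*A0 - 6*b1^3*cR3 + 6*b1^2*b2*cP3 - 6*b1^2*b2*cR4 - 8*b1^2*cR1 + 8*b1^2*B1 + 6*b1*b2^2*cP4 - 6*b1*b2^2*cR5 + 8*b1*b2*cP1 - 8*b1*b2*cR2 - 8*b1*b2*A1 + 8*b1*b2*B2 - 12*b1*cR0 + 12*b1*B0 + 6*b2^3*cP5 + 8*b2^2*cP2 - 8*b2^2*A2 + 12*b2*cP0 - 12*b2*A0).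
Definition Ds2 (a1 a2 b1 b2 cP0 cP1 cP2 cP3 cP4 cP5 cR0 cR1 cR2 cR3 cR4 cR5 cW0 cW1 cW2 cW3 cW4 cW5 A0 A1 A2 B0 B1 B2 G1 G2 : R) : R :=
  (8*b1^3*cR3 - 8*b1^2*b2*cP3 + 8*b1^2*b2*cR4 + 12*b1^2*cR1 - 12*b1^2*B1 - 8*b1*b2^2*cP4 + 8*b1*b2^2*cR5 - 12*b1*b2*cP1 + 12*b1*b2*cR2 + 12*b1*b2*A1 - 12*b1*b2*B2 + 24*b1*cR0 - 24*b1*B0 - 8*b2^3*cP5 - 12*b2^2*cP2 + 12*b2^2*A2 - 24*b2*cP0 + 24*b2*A0).
Definition Ds3 (a1 a2 b1 b2 cP0 cP1 cP2 cP3 cP4 cP5 cR0 cR1 cR2 cR3 cR4 cR5 cW0 cW1 cW2 cW3 cW4 cW5 A0 A1 A2 B0 B1 B2 G1 G2 : R) : R :=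
  (2*b1^3*cR3 - 2*b1^2*b2*cP3 + 2*b1^2*b2*cR4 + 4*b1^2*cR1 - 4*b1^2*B1 - 2*b1*b2^2*cP4 + 2*b1*b2^2*cR5 - 4*b1*b2*cP1 + 4*b1*b2*cR2 + 4*b1*b2*A1 - 4*b1*b2*B2 + 12*b1*cR0 - 12*b1*B0 - 2*b2^3*cP5 - 4*b2^2*cP2 + 4*b2^2*A2 - 12*b2*cP0 + 12*b2*A0).
Definition Ds4 (a1 a2 b1 b2 cP0 cP1 cP2 cP3 cP4 cP5 cR0 cR1 cR2 cR3 cR4 cR5 cW0 cW1 cW2 cW3 cW4 cW5 A0 A1 A2 B0 B1 B2 G1 G2 : R) : R :=
  (- 8*a1^3*cR3 + 8*a1^2*a2*cP3 - 8*a1^2*a2*cR4 - 12*a1^2*cR1 + 12*a1^2*B1 + 8*a1*a2^2*cP4 - 8*a1*a2^2*cR5 + 12*a1*a2*cP1 - 12*a1*a2*cR2 - 12*a1*a2*A1 + 12*a1*a2*B2 - 24*a1*cR0 + 24*a1*B0 + 8*a2^3*cP5 + 12*a2^2*cP2 - 12*a2^2*A2 + 24*a2*cP0 - 24*a2*A0).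
Definition Ds5 (a1 a2 b1 b2 cP0 cP1 cP2 cP3 cP4 cP5 cR0 cR1 cR2 cR3 cR4 cR5 cW0 cW1 cW2 cW3 cW4 cW5 A0 A1 A2 B0 B1 B2 G1 G2 : R) : R :=
  (- 6*a1^3*cR3 + 6*a1^2*a2*cP3 - 6*a1^2*a2*cR4 - 8*a1^2*cR1 + 8*a1^2*B1 + 6*a1*a2^2*cP4 - 6*a1*a2^2*cR5 + 8*a1*a2*cP1 - 8*a1*a2*cR2 - 8*a1*a2*A1 + 8*a1*a2*B2 - 12*a1*cR0 + 12*a1*B0 + 6*a2^3*cP5 + 8*a2^2*cP2 - 8*a2^2*A2 + 12*a2*cP0 - 12*a2*A0).
Definition Ds6 (a1 a2 b1 b2 cP0 cP1 cP2 cP3 cP4 cP5 cR0 cR1 cR2 cR3 cR4 cR5 cW0 cW1 cW2 cW3 cW4 cW5 A0 A1 A2 B0 B1 B2 G1 G2 : R) : R :=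
  (60*a1^2*cP3 - 60*a1^2*G1 + 60*a1*a2*cP4 - 60*a1*a2*G2 + 60*a1*b1*cP3 - 60*a1*b1*G1 + 30*a1*b2*cP4 - 30*a1*b2*G2 + 120*a1*cP1 - 120*a1*A1 + 60*a2^2*cP5 + 30*a2*b1*cP4 - 30*a2*b1*G2 + 60*a2*b2*cP5 + 120*a2*cP2 - 120*a2*A2 + 60*b1^2*cP3 - 60*b1^2*G1 + 60*b1*b2*cP4 - 60*b1*b2*G2 + 120*b1*cP1 - 120*b1*A1 + 60*b2^2*cP5 + 120*b2*cP2 - 120*b2*A2 + 360*cP0 - 360*A0).
Definition Ds7 (a1 a2 b1 b2 cP0 cP1 cP2 cP3 cP4 cP5 cR0 cR1 cR2 cR3 cR4 cR5 cW0 cW1 cW2 cW3 cW4 cW5 A0 A1 A2 B0 B1 B2 G1 G2 : R) : R :=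
  (60*a1^2*cR3 + 60*a1*a2*cR4 - 60*a1*a2*G1 + 60*a1*b1*cR3 + 30*a1*b2*cR4 - 30*a1*b2*G1 + 120*a1*cR1 - 120*a1*B1 + 60*a2^2*cR5 - 60*a2^2*G2 + 30*a2*b1*cR4 - 30*a2*b1*G1 + 60*a2*b2*cR5 - 60*a2*b2*G2 + 120*a2*cR2 - 120*a2*B2 + 60*b1^2*cR3 + 60*b1*b2*cR4 - 60*b1*b2*G1 + 120*b1*cR1 - 120*b1*B1 + 60*b2^2*cR5 - 60*b2^2*G2 + 120*b2*cR2 - 120*b2*B2 + 360*cR0 - 360*B0).
Definition ls0 (a1 a2 b1 b2 cP0 cP1 cP2 cP3 cP4 cP5 cR0 cR1 cR2 cR3 cR4 cR5 cW0 cW1 cW2 cW3 cW4 cW5 A0 A1 A2 B0 B1 B2 G1 G2 : R) : R :=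
  (- 4*a1^2*cW4 + 8*a1*a2*cW3 - 8*a1*a2*cW5 - a1*b1*cW4 + 6*a1*b2*cW3 + 4*a1*b2*cW5 + 4*a2^2*cW4 - 4*a2*b1*cW3 - 6*a2*b1*cW5 + a2*b2*cW4 + 2*b1^2*cW4 - 4*b1*b2*cW3 + 4*b1*b2*cW5 - 2*b2^2*cW4).
Definition ls1 (a1 a2 b1 b2 cP0 cP1 cP2 cP3 cP4 cP5 cR0 cR1 cR2 cR3 cR4 cR5 cW0 cW1 cW2 cW3 cW4 cW5 A0 A1 A2 B0 B1 B2 G1 G2 : R) : R :=
  (3*a1^2*cW4 - 6*a1*a2*cW3 + 6*a1*a2*cW5 - 5*a1*b2*cW3 - 5*a1*b2*cW5 - 3*a2^2*cW4 + 5*a2*b1*cW3 + 5*a2*b1*cW5 - 3*b1^2*cW4 + 6*b1*b2*cW3 - 6*b1*b2*cW5 + 3*b2^2*cW4).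
Definition ls2 (a1 a2 b1 b2 cP0 cP1 cP2 cP3 cP4 cP5 cR0 cR1 cR2 cR3 cR4 cR5 cW0 cW1 cW2 cW3 cW4 cW5 A0 A1 A2 B0 B1 B2 G1 G2 : R) : R :=
  (- 3*a1^2*cW4 + 6*a1*a2*cW3 - 6*a1*a2*cW5 + 9*a1*b1*cW4 - 4*a1*b2*cW3 + 14*a1*b2*cW5 + 3*a2^2*cW4 - 14*a2*b1*cW3 + 4*a2*b1*cW5 - 9*a2*b2*cW4 - 4*b1^2*cW4 + 8*b1*b2*cW3 - 8*b1*b2*cW5 + 4*b2^2*cW4).
Definition ls3 (a1 a2 b1 b2 cP0 cP1 cP2 cP3 cP4 cP5 cR0 cR1 cR2 cR3 cR4 cR5 cW0 cW1 cW2 cW3 cW4 cW5 A0 A1 A2 B0 B1 B2 G1 G2 : R) : R :=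
  (- 6*a1*b1*cW4 + a1*b2*cW3 - 11*a1*b2*cW5 + 11*a2*b1*cW3 - a2*b1*cW5 + 6*a2*b2*cW4 + 3*b1^2*cW4 - 6*b1*b2*cW3 + 6*b1*b2*cW5 - 3*b2^2*cW4).
Definition ls4 (a1 a2 b1 b2 cP0 cP1 cP2 cP3 cP4 cP5 cR0 cR1 cR2 cR3 cR4 cR5 cW0 cW1 cW2 cW3 cW4 cW5 A0 A1 A2 B0 B1 B2 G1 G2 : R) : R :=
  (2*a1^2*cW4 - 4*a1*a2*cW3 + 4*a1*a2*cW5 - 3*a1*b1*cW4 + 8*a1*b2*cW3 + 2*a1*b2*cW5 - 2*a2^2*cW4 - 2*a2*b1*cW3 - 8*a2*b1*cW5 + 3*a2*b2*cW4 - 3*b1^2*cW4 + 6*b1*b2*cW3 - 6*b1*b2*cW5 + 3*b2^2*cW4).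
Definition ls5 (a1 a2 b1 b2 cP0 cP1 cP2 cP3 cP4 cP5 cR0 cR1 cR2 cR3 cR4 cR5 cW0 cW1 cW2 cW3 cW4 cW5 A0 A1 A2 B0 B1 B2 G1 G2 : R) : R :=
  (- 3*a1^2*cW4 + 6*a1*a2*cW3 - 6*a1*a2*cW5 + 6*a1*b1*cW4 - 11*a1*b2*cW3 + a1*b2*cW5 + 3*a2^2*cW4 - a2*b1*cW3 + 11*a2*b1*cW5 - 6*a2*b2*cW4).
Definition ls6 (a1 a2 b1 b2 cP0 cP1 cP2 cP3 cP4 cP5 cR0 cR1 cR2 cR3 cR4 cR5 cW0 cW1 cW2 cW3 cW4 cW5 A0 A1 A2 B0 B1 B2 G1 G2 : R) : R :=
  (- 6*a1^2*b2*cW4 + 3*a1*a2*b1*cW4 + 4*a1*a2*b2*cW3 - 14*a1*a2*b2*cW5 - 3*a1*b1*b2*cW4 - 2*a1*b2^2*cW3 - 8*a1*b2^2*cW5 - 15*a1*b2*cW2 + 2*a2^2*b1*cW3 + 8*a2^2*b1*cW5 + 3*a2^2*b2*cW4 + 6*a2*b1^2*cW4 - 4*a2*b1*b2*cW3 + 14*a2*b1*b2*cW5 + 15*a2*b1*cW2 - 3*a2*b2^2*cW4).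
Definition ls7 (a1 a2 b1 b2 cP0 cP1 cP2 cP3 cP4 cP5 cR0 cR1 cR2 cR3 cR4 cR5 cW0 cW1 cW2 cW3 cW4 cW5 A0 A1 A2 B0 B1 B2 G1 G2 : R) : R :=
  (3*a1^2*b1*cW4 + 8*a1^2*b2*cW3 + 2*a1^2*b2*cW5 - 14*a1*a2*b1*cW3 + 4*a1*a2*b1*cW5 + 3*a1*a2*b2*cW4 - 3*a1*b1^2*cW4 + 14*a1*b1*b2*cW3 - 4*a1*b1*b2*cW5 + 6*a1*b2^2*cW4 + 15*a1*b2*cW1 - 6*a2^2*b1*cW4 - 8*a2*b1^2*cW3 - 2*a2*b1^2*cW5 - 3*a2*b1*b2*cW4 - 15*a2*b1*cW1).
Definition Us1 (a1 a2 b1 b2 cP0 cP1 cP2 cP3 cP4 cP5 cR0 cR1 cR2 cR3 cR4 cR5 cW0 cW1 cW2 cW3 cW4 cW5 A0 A1 A2 B0 B1 B2 G1 G2 : R) : R :=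
  (- 5*a1^4*b1*cR3 + a1^4*b2*cP3 - a1^4*b2*cR4 + 4*a1^3*a2*b1*cP3 - 4*a1^3*a2*b1*cR4 + 2*a1^3*a2*b2*cP4 - 2*a1^3*a2*b2*cR3 - 2*a1^3*a2*b2*cR5 + 5*a1^3*b1^2*cR3 - 3*a1^3*b1*b2*cP3 + 3*a1^3*b1*b2*cR4 - a1^3*b2^2*cP4 - a1^3*b2^2*cR3 + a1^3*b2^2*cR5 + 3*a1^2*a2^2*b1*cP4 - 3*a1^2*a2^2*b1*cR3 - 3*a1^2*a2^2*b1*cR5 + 3*a1^2*a2^2*b2*cP3 + 3*a1^2*a2^2*b2*cP5 - 3*a1^2*a2^2*b2*cR4 - 2*a1^2*a2*b1^2*cP3 + 2*a1^2*a2*b1^2*cR4 - 4*a1^2*a2*b1*b2*cP4 + 3*a1^2*a2*b1*b2*cR3 + 4*a1^2*a2*b1*b2*cR5 - 3*a1^2*a2*b2^2*cP5 + 5*a1^2*b1^3*cR3 - 2*a1^2*b1^2*b2*cP3 + 2*a1^2*b1^2*b2*cR4 + 3*a1^2*b1*b2^2*cR3 - a1^2*b2^3*cP3 + a1^2*b2^3*cP5 + a1^2*b2^3*cR4 + 2*a1*a2^3*b1*cP3 + 2*a1*a2^3*b1*cP5 - 2*a1*a2^3*b1*cR4 + 4*a1*a2^3*b2*cP4 - 4*a1*a2^3*b2*cR5 + 3*a1*a2^2*b1^2*cR3 - 4*a1*a2^2*b1*b2*cP3 - 3*a1*a2^2*b1*b2*cP5 + 4*a1*a2^2*b1*b2*cR4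 - 2*a1*a2^2*b2^2*cP4 + 2*a1*a2^2*b2^2*cR5 - 3*a1*a2*b1^3*cP3 + 3*a1*a2*b1^3*cR4 - 4*a1*a2*b1^2*b2*cP4 + 3*a1*a2*b1^2*b2*cR3 + 4*a1*a2*b1^2*b2*cR5 - 4*a1*a2*b1*b2^2*cP3 - 3*a1*a2*b1*b2^2*cP5 + 4*a1*a2*b1*b2^2*cR4 - 3*a1*a2*b2^3*cP4 + 3*a1*a2*b2^3*cR5 - 5*a1*b1^4*cR3 + 4*a1*b1^3*b2*cP3 - 4*a1*b1^3*b2*cR4 + 3*a1*b1^2*b2^2*cP4 - 3*a1*b1^2*b2^2*cR3 - 3*a1*b1^2*b2^2*cR5 + 2*a1*b1*b2^3*cP3 + 2*a1*b1*b2^3*cP5 - 2*a1*b1*b2^3*cR4 + a1*b2^4*cP4 - a1*b2^4*cR5 + a2^4*b1*cP4 - a2^4*b1*cR5 + 5*a2^4*b2*cP5 - a2^3*b1^2*cP3 + a2^3*b1^2*cP5 + a2^3*b1^2*cR4 - 3*a2^3*b1*b2*cP4 + 3*a2^3*b1*b2*cR5 - 5*a2^3*b2^2*cP5 - a2^2*b1^3*cP4 - a2^2*b1^3*cR3 + a2^2*b1^3*cR5 - 3*a2^2*b1^2*b2*cP5 - 2*a2^2*b1*b2^2*cP4 + 2*a2^2*b1*b2^2*cR5 - 5*a2^2*b2^3*cP5 + a2*b1^4*cP3 - a2*b1^4*cR4 + 2*a2*b1^3*b2*cP4 - 2*a2*b1^3*b2*cR3 - 2*a2*b1^3*b2*cR5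 + 3*a2*b1^2*b2^2*cP3 + 3*a2*b1^2*b2^2*cP5 - 3*a2*b1^2*b2^2*cR4 + 4*a2*b1*b2^3*cP4 - 4*a2*b1*b2^3*cR5 + 5*a2*b2^4*cP5).
Definition Us2 (a1 a2 b1 b2 cP0 cP1 cP2 cP3 cP4 cP5 cR0 cR1 cR2 cR3 cR4 cR5 cW0 cW1 cW2 cW3 cW4 cW5 A0 A1 A2 B0 B1 B2 G1 G2 : R) : R :=
  (10*a1^3*b1^2*cR3 - 5*a1^3*b1*b2*cP3 + 5*a1^3*b1*b2*cR4 - 2*a1^3*b2^2*cP4 + a1^3*b2^2*cR3 + 2*a1^3*b2^2*cR5 - 5*a1^2*a2*b1^2*cP3 + 5*a1^2*a2*b1^2*cR4 - 6*a1^2*a2*b1*b2*cP4 + 3*a1^2*a2*b1*b2*cR3 + 6*a1^2*a2*b1*b2*cR5 - 2*a1^2*a2*b2^2*cP3 - 6*a1^2*a2*b2^2*cP5 + 2*a1^2*a2*b2^2*cR4 - 15*a1^2*b1^3*cR3 + 10*a1^2*b1^2*b2*cP3 - 10*a1^2*b1^2*b2*cR4 + 6*a1^2*b1*b2^2*cP4 - 3*a1^2*b1*b2^2*cR3 - 6*a1^2*b1*b2^2*cR5 + a1^2*b2^3*cP3 + 3*a1^2*b2^3*cP5 - a1^2*b2^3*cR4 - 2*a1*a2^2*b1^2*cP4 + 6*a1*a2^2*b1^2*cR3 + 2*a1*a2^2*b1^2*cR5 - 6*a1*a2^2*b1*b2*cP3 - 3*a1*a2^2*b1*b2*cP5 +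 6*a1*a2^2*b1*b2*cR4 - 5*a1*a2^2*b2^2*cP4 + 5*a1*a2^2*b2^2*cR5 + 5*a1*a2*b1^3*cP3 - 5*a1*a2*b1^3*cR4 + 8*a1*a2*b1^2*b2*cP4 - 9*a1*a2*b1^2*b2*cR3 - 8*a1*a2*b1^2*b2*cR5 + 8*a1*a2*b1*b2^2*cP3 + 9*a1*a2*b1*b2^2*cP5 - 8*a1*a2*b1*b2^2*cR4 + 5*a1*a2*b2^3*cP4 - 5*a1*a2*b2^3*cR5 + 5*a1*b1^4*cR3 - 4*a1*b1^3*b2*cP3 + 4*a1*b1^3*b2*cR4 - 3*a1*b1^2*b2^2*cP4 + 3*a1*b1^2*b2^2*cR3 + 3*a1*b1^2*b2^2*cR5 - 2*a1*b1*b2^3*cP3 - 2*a1*b1*b2^3*cP5 + 2*a1*b1*b2^3*cR4 - a1*b2^4*cP4 + a1*b2^4*cR5 - 2*a2^3*b1^2*cP3 - a2^3*b1^2*cP5 + 2*a2^3*b1^2*cR4 - 5*a2^3*b1*b2*cP4 + 5*a2^3*b1*b2*cR5 - 10*a2^3*b2^2*cP5 + a2^2*b1^3*cP4 - 3*a2^2*b1^3*cR3 - a2^2*b1^3*cR5 + 6*a2^2*b1^2*b2*cP3 + 3*a2^2*b1^2*b2*cP5 - 6*a2^2*b1^2*b2*cR4 + 10*a2^2*b1*b2^2*cP4 - 10*a2^2*b1*b2^2*cR5 + 15*a2^2*b2^3*cP5 - a2*b1^4*cP3 + a2*b1^4*cR4 - 2*a2*b1^3*b2*cP4 + 2*a2*b1^3*b2*cR3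 + 2*a2*b1^3*b2*cR5 - 3*a2*b1^2*b2^2*cP3 - 3*a2*b1^2*b2^2*cP5 + 3*a2*b1^2*b2^2*cR4 - 4*a2*b1*b2^3*cP4 + 4*a2*b1*b2^3*cR5 - 5*a2*b2^4*cP5).
Definition Us3 (a1 a2 b1 b2 cP0 cP1 cP2 cP3 cP4 cP5 cR0 cR1 cR2 cR3 cR4 cR5 cW0 cW1 cW2 cW3 cW4 cW5 A0 A1 A2 B0 B1 B2 G1 G2 : R) : R :=
  (5*a1^4*b1*cR3 - a1^4*b2*cP3 + a1^4*b2*cR4 - 4*a1^3*a2*b1*cP3 + 4*a1^3*a2*b1*cR4 - 2*a1^3*a2*b2*cP4 + 2*a1^3*a2*b2*cR3 + 2*a1^3*a2*b2*cR5 - 15*a1^3*b1^2*cR3 + 5*a1^3*b1*b2*cP3 - 5*a1^3*b1*b2*cR4 + a1^3*b2^2*cP4 - 3*a1^3*b2^2*cR3 - a1^3*b2^2*cR5 - 3*a1^2*a2^2*b1*cP4 + 3*a1^2*a2^2*b1*cR3 + 3*a1^2*a2^2*b1*cR5 - 3*a1^2*a2^2*b2*cP3 - 3*a1^2*a2^2*b2*cP5 + 3*a1^2*a2^2*b2*cR4 + 10*a1^2*a2*b1^2*cP3 - 10*a1^2*a2*b1^2*cR4 + 8*a1^2*a2*b1*b2*cP4 - 9*a1^2*a2*b1*b2*cR3 - 8*a1^2*a2*b1*b2*cR5 + 6*a1^2*a2*b2^2*cP3 + 3*a1^2*a2*b2^2*cP5 - 6*a1^2*a2*b2^2*cR4 +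 10*a1^2*b1^3*cR3 - 5*a1^2*b1^2*b2*cP3 + 5*a1^2*b1^2*b2*cR4 - 2*a1^2*b1*b2^2*cP4 + 6*a1^2*b1*b2^2*cR3 + 2*a1^2*b1*b2^2*cR5 - 2*a1^2*b2^3*cP3 - a1^2*b2^3*cP5 + 2*a1^2*b2^3*cR4 - 2*a1*a2^3*b1*cP3 - 2*a1*a2^3*b1*cP5 + 2*a1*a2^3*b1*cR4 - 4*a1*a2^3*b2*cP4 + 4*a1*a2^3*b2*cR5 + 6*a1*a2^2*b1^2*cP4 - 3*a1*a2^2*b1^2*cR3 - 6*a1*a2^2*b1^2*cR5 + 8*a1*a2^2*b1*b2*cP3 + 9*a1*a2^2*b1*b2*cP5 - 8*a1*a2^2*b1*b2*cR4 + 10*a1*a2^2*b2^2*cP4 - 10*a1*a2^2*b2^2*cR5 - 5*a1*a2*b1^3*cP3 + 5*a1*a2*b1^3*cR4 - 6*a1*a2*b1^2*b2*cP4 + 3*a1*a2*b1^2*b2*cR3 + 6*a1*a2*b1^2*b2*cR5 - 6*a1*a2*b1*b2^2*cP3 - 3*a1*a2*b1*b2^2*cP5 + 6*a1*a2*b1*b2^2*cR4 - 5*a1*a2*b2^3*cP4 + 5*a1*a2*b2^3*cR5 - a2^4*b1*cP4 + a2^4*b1*cR5 - 5*a2^4*b2*cP5 + a2^3*b1^2*cP3 + 3*a2^3*b1^2*cP5 - a2^3*b1^2*cR4 + 5*a2^3*b1*b2*cP4 - 5*a2^3*b1*b2*cR5 + 15*a2^3*b2^2*cP5 - 2*a2^2*b1^3*cP4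 + a2^2*b1^3*cR3 + 2*a2^2*b1^3*cR5 - 2*a2^2*b1^2*b2*cP3 - 6*a2^2*b1^2*b2*cP5 + 2*a2^2*b1^2*b2*cR4 - 5*a2^2*b1*b2^2*cP4 + 5*a2^2*b1*b2^2*cR5 - 10*a2^2*b2^3*cP5).

Theorem lemma2p1
  (z1 z2 z3 : pt)
  (hccw : 0 < cross (psub z2 z1) (psub z3 z1))
  (d : R)
  (hd : exists c : pt,
          pnorm (psub z2 c) = pnorm (psub z1 c) /\
          pnorm (psub z3 c) = pnorm (psub z1 c) /\
          d = 2 * pnorm (psub z1 c))
  (p2 : pt -> pt)
  (hp2 : is_P2 (fun x => fst (p2 x)) /\ is_P2 (fun x => snd (p2 x)))
  (w2 : pt -> R) (hw2 : is_P2 w2)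
  (Pi : pt -> pt) (hPi : is_RT1 Pi)
  (hPi_edge : forall k : nat, (1 <= k <= 3)%nat ->
     forall v : pt -> R, is_P1_edge (estart z1 z2 z3 k) (eend z1 z2 z3 k) v ->
     edge_int (estart z1 z2 z3 k) (eend z1 z2 z3 k)
       (fun x => dot (psub (p2 x) (Pi x)) (nrm z1 z2 z3 k) * v x) = 0)
  (hPi_int1 : tri_int z1 z2 z3 (fun x => fst (psub (p2 x) (Pi x))) = 0)
  (hPi_int2 : tri_int z1 z2 z3 (fun x => snd (psub (p2 x) (Pi x))) = 0) :
  tri_int z1 z2 z3 (fun x => dot (psub (p2 x) (Pi x)) (nabla_perp w2 x))
  = rhs_term z1 z2 z3 d p2 w2 1 + rhs_term z1 z2 z3 d p2 w2 2
    + rhs_term z1 z2 z3 d p2 w2 3.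
Proof.
  destruct (circ z1 z2 z3 d hccw hd) as [HL Hd].
  destruct hp2 as [hp2a hp2b].
  destruct (P2_local _ (fst z1) (snd z1) hp2a) as [cP0 [cP1 [cP2 [cP3 [cP4 [cP5 Hp1]]]]]].
  destruct (P2_local _ (fst z1) (snd z1) hp2b) as [cR0 [cR1 [cR2 [cR3 [cR4 [cR5 Hp2]]]]]].
  destruct (P2_local _ (fst z1) (snd z1) hw2) as [cW0 [cW1 [cW2 [cW3 [cW4 [cW5 Hw]]]]]].
  destruct (RT1_local Pi (fst z1) (snd z1) hPi) as [A0 [A1 [A2 [B0 [B1 [B2 [G1 [G2 HPi]]]]]]]].
  assert (HP1 := fun x => proj1 (HPi x)). assert (HP2 := fun x => proj2 (HPi x)). cbv beta in HP1, HP2.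
  clear hp2a hp2b hw2 hPi HPi hd.
  destruct z1 as [o1 o2], z2 as [x2 y2], z3 as [x3 y3].
  cbn [fst snd] in *.
  assert (exists a1, x2 = o1 + a1) as [a1 ->] by (exists (x2 - o1); ring).
  assert (exists a2, y2 = o2 + a2) as [a2 ->] by (exists (y2 - o2); ring).
  assert (exists b1, x3 = o1 + b1) as [b1 ->] by (exists (x3 - o1); ring).
  assert (exists b2, y3 = o2 + b2) as [b2 ->] by (exists (y3 - o2); ring).
  assert (Ecr : cross (psub (o1 + a1, o2 + a2) (o1, o2)) (psub (o1 + b1, o2 + b2) (o1, o2)) = a1*b2 - a2*b1)
    by (unfold cross, psub; simpl; ring).
  assert (HQ1 : 0 < Qd (o1, o2) (o1 + a1, o2 + a2) (o1 + b1, o2 + b2) 1).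
  { apply (Qpos' (b1 - a1) (b2 - a2) (- a1) (- a2)).
    - replace ((b1 - a1) * - a2 - (b2 - a2) * - a1) with (a1*b2 - a2*b1) by ring. rewrite <- Ecr. exact hccw.
    - unfold Qd, Dl, dot, psub. simpl. ring. }
  assert (HQ2 : 0 < Qd (o1, o2) (o1 + a1, o2 + a2) (o1 + b1, o2 + b2) 2).
  { apply (Qpos' (- b1) (- b2) (a1 - b1) (a2 - b2)).
    - replace (- b1 * (a2 - b2) - - b2 * (a1 - b1)) with (a1*b2 - a2*b1) by ring. rewrite <- Ecr. exact hccw.
    - unfold Qd, Dl, dot, psub. simpl. ring. }
  assert (HQ3 : 0 < Qd (o1, o2) (o1 + a1, o2 + a2) (o1 + b1, o2 + b2) 3).
  { apply (Qpos' a1 a2 b1 b2).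
    - rewrite <- Ecr. exact hccw.
    - unfold Qd, Dl, dot, psub. simpl. ring. }
  destruct (edge_hyps _ _ _ p2 Pi 1 o1 o2 cP0 cP1 cP2 cP3 cP4 cP5 cR0 cR1 cR2 cR3 cR4 cR5 A0 A1 A2 B0 B1 B2 G1 G2
              Hp1 Hp2 HP1 HP2 HQ1 (hPi_edge 1%nat ltac:(lia))) as [E10 E11].
  destruct (edge_hyps _ _ _ p2 Pi 2 o1 o2 cP0 cP1 cP2 cP3 cP4 cP5 cR0 cR1 cR2 cR3 cR4 cR5 A0 A1 A2 B0 B1 B2 G1 G2
              Hp1 Hp2 HP1 HP2 HQ2 (hPi_edge 2%nat ltac:(lia))) as [E20 E21].
  destruct (edge_hyps _ _ _ p2 Pi 3 o1 o2 cP0 cP1 cP2 cP3 cP4 cP5 cR0 cR1 cR2 cR3 cR4 cR5 A0 A1 A2 B0 B1 B2 G1 G2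
              Hp1 Hp2 HP1 HP2 HQ3 (hPi_edge 3%nat ltac:(lia))) as [E30 E31].
  clear hPi_edge.
  apply int_hyp in hPi_int1;
    [| intros s t; unfold interp2_6, psub, tpt, padd, pscal; cbn [fst snd]; rewrite !Hp1, !HP1; cbn [fst snd]; unfold q2f; ring | exact hccw].
  apply int_hyp in hPi_int2;
    [| intros s t; unfold interp2_6, psub, tpt, padd, pscal; cbn [fst snd]; rewrite !Hp2, !HP2; cbn [fst snd]; unfold q2f; ring | exact hccw].
  rewrite tri_int_quad.
  2:{ intros s t. unfold interp2_6, dot, psub, nabla_perp, tpt, padd, pscal. cbn [fst snd].
      rewrite !(dder_q2 w2 o1 o2 cW0 cW1 cW2 cW3 cW4 cW5 Hw).
      rewrite !Hp1, !Hp2, !HP1, !HP2. cbn [fst snd]. unfold q2f. ring. }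
  rewrite Rabs_pos_eq by lra.
  rewrite Ecr in *.
  assert (Hcr : a1*b2 - a2*b1 <> 0) by lra.
  assert (R1 : rhs_term (o1, o2) (o1 + a1, o2 + a2) (o1 + b1, o2 + b2) d p2 w2 1 = Us1 a1 a2 b1 b2 cP0 cP1 cP2 cP3 cP4 cP5 cR0 cR1 cR2 cR3 cR4 cR5 cW0 cW1 cW2 cW3 cW4 cW5 A0 A1 A2 B0 B1 B2 G1 G2 * Hq cW3 cW4 cW5 (Dl (o1, o2) (o1 + a1, o2 + a2) (o1 + b1, o2 + b2) 1) (Dl (o1, o2) (o1 + a1, o2 + a2) (o1 + b1, o2 + b2) 1) / (720 * (a1*b2 - a2*b1))).
  { rewrite (rhs_gen _ _ _ d p2 w2 1 o1 o2 cP0 cP1 cP2 cP3 cP4 cP5 cR0 cR1 cR2 cR3 cR4 cR5 cW0 cW1 cW2 cW3 cW4 cW5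
               Hp1 Hp2 Hw) by (try rewrite Ecr; assumption).
    rewrite Ecr. cbv zeta. apply VU_lemma; [lra | lra | ].
    unfold Us1, Qd, Dl, trif, Hq, rot, dot, psub, estart, eend, vtx. simpl. ring. }
  assert (R2 : rhs_term (o1, o2) (o1 + a1, o2 + a2) (o1 + b1, o2 + b2) d p2 w2 2 = Us2 a1 a2 b1 b2 cP0 cP1 cP2 cP3 cP4 cP5 cR0 cR1 cR2 cR3 cR4 cR5 cW0 cW1 cW2 cW3 cW4 cW5 A0 A1 A2 B0 B1 B2 G1 G2 * Hq cW3 cW4 cW5 (Dl (o1, o2) (o1 + a1, o2 + a2) (o1 + b1, o2 + b2) 2) (Dl (o1, o2) (o1 + a1, o2 + a2) (o1 + b1, o2 + b2) 2) / (720 * (a1*b2 - a2*b1))).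
  { rewrite (rhs_gen _ _ _ d p2 w2 2 o1 o2 cP0 cP1 cP2 cP3 cP4 cP5 cR0 cR1 cR2 cR3 cR4 cR5 cW0 cW1 cW2 cW3 cW4 cW5
               Hp1 Hp2 Hw) by (try rewrite Ecr; assumption).
    rewrite Ecr. cbv zeta. apply VU_lemma; [lra | lra | ].
    unfold Us2, Qd, Dl, trif, Hq, rot, dot, psub, estart, eend, vtx. simpl. ring. }
  assert (R3 : rhs_term (o1, o2) (o1 + a1, o2 + a2) (o1 + b1, o2 + b2) d p2 w2 3 = Us3 a1 a2 b1 b2 cP0 cP1 cP2 cP3 cP4 cP5 cR0 cR1 cR2 cR3 cR4 cR5 cW0 cW1 cW2 cW3 cW4 cW5 A0 A1 A2 B0 B1 B2 G1 G2 * Hq cW3 cW4 cW5 (Dl (o1, o2) (o1 + a1, o2 + a2) (o1 + b1, o2 + b2) 3) (Dl (o1, o2) (o1 + a1, o2 + a2) (o1 + b1, o2 + b2) 3) / (720 * (a1*b2 - a2*b1))).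
  { rewrite (rhs_gen _ _ _ d p2 w2 3 o1 o2 cP0 cP1 cP2 cP3 cP4 cP5 cR0 cR1 cR2 cR3 cR4 cR5 cW0 cW1 cW2 cW3 cW4 cW5
               Hp1 Hp2 Hw) by (try rewrite Ecr; assumption).
    rewrite Ecr. cbv zeta. apply VU_lemma; [lra | lra | ].
    unfold Us3, Qd, Dl, trif, Hq, rot, dot, psub, estart, eend, vtx. simpl. ring. }

  rewrite R1, R2, R3.
  match goal with |- _ * ?X = _ => remember X as hL eqn:EL end.
  revert E10 E11 E20 E21 E30 E31 hPi_int1 hPi_int2.
  match goal with |- ?X = 0 -> _ => remember X as h10 eqn:F10 end. intro E10.
  match goal with |- ?X = 0 -> _ => remember X as h11 eqn:F11 end. intro E11.
  match goal with |- ?X = 0 -> _ => remember X as h20 eqn:F20 end. intro E20.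
  match goal with |- ?X = 0 -> _ => remember X as h21 eqn:F21 end. intro E21.
  match goal with |- ?X = 0 -> _ => remember X as h30 eqn:F30 end. intro E30.
  match goal with |- ?X = 0 -> _ => remember X as h31 eqn:F31 end. intro E31.
  match goal with |- ?X = 0 -> _ => remember X as hi1 eqn:Fi1 end. intro Ei1.
  match goal with |- ?X = 0 -> _ => remember X as hi2 eqn:Fi2 end. intro Ei2.
  assert (Z10 : Ds0 a1 a2 b1 b2 cP0 cP1 cP2 cP3 cP4 cP5 cR0 cR1 cR2 cR3 cR4 cR5 cW0 cW1 cW2 cW3 cW4 cW5 A0 A1 A2 B0 B1 B2 G1 G2 = 0).
  { replace (Ds0 a1 a2 b1 b2 cP0 cP1 cP2 cP3 cP4 cP5 cR0 cR1 cR2 cR3 cR4 cR5 cW0 cW1 cW2 cW3 cW4 cW5 A0 A1 A2 B0 B1 B2 G1 G2) with (24 * h10). { rewrite E10. ring. }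
    rewrite F10, q1_24. unfold seg, estart, eend, vtx, Dl, rot, dot, psub, padd, pscal. simpl.
    rewrite ?Hp1, ?Hp2, ?HP1, ?HP2. cbn [fst snd]. unfold q2f, Ds0. ring. }
  assert (Z11 : Ds1 a1 a2 b1 b2 cP0 cP1 cP2 cP3 cP4 cP5 cR0 cR1 cR2 cR3 cR4 cR5 cW0 cW1 cW2 cW3 cW4 cW5 A0 A1 A2 B0 B1 B2 G1 G2 = 0).
  { replace (Ds1 a1 a2 b1 b2 cP0 cP1 cP2 cP3 cP4 cP5 cR0 cR1 cR2 cR3 cR4 cR5 cW0 cW1 cW2 cW3 cW4 cW5 A0 A1 A2 B0 B1 B2 G1 G2) with (24 * h11). { rewrite E11. ring. }
    rewrite F11, q1_24. unfold seg, estart, eend, vtx, Dl, rot, dot, psub, padd, pscal. simpl.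
    rewrite ?Hp1, ?Hp2, ?HP1, ?HP2. cbn [fst snd]. unfold q2f, Ds1. ring. }
  assert (Z20 : Ds2 a1 a2 b1 b2 cP0 cP1 cP2 cP3 cP4 cP5 cR0 cR1 cR2 cR3 cR4 cR5 cW0 cW1 cW2 cW3 cW4 cW5 A0 A1 A2 B0 B1 B2 G1 G2 = 0).
  { replace (Ds2 a1 a2 b1 b2 cP0 cP1 cP2 cP3 cP4 cP5 cR0 cR1 cR2 cR3 cR4 cR5 cW0 cW1 cW2 cW3 cW4 cW5 A0 A1 A2 B0 B1 B2 G1 G2) with (24 * h20). { rewrite E20. ring. }
    rewrite F20, q1_24. unfold seg, estart, eend, vtx, Dl, rot, dot, psub, padd, pscal. simpl.
    rewrite ?Hp1, ?Hp2, ?HP1, ?HP2. cbn [fst snd]. unfold q2f, Ds2. ring. }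
  assert (Z21 : Ds3 a1 a2 b1 b2 cP0 cP1 cP2 cP3 cP4 cP5 cR0 cR1 cR2 cR3 cR4 cR5 cW0 cW1 cW2 cW3 cW4 cW5 A0 A1 A2 B0 B1 B2 G1 G2 = 0).
  { replace (Ds3 a1 a2 b1 b2 cP0 cP1 cP2 cP3 cP4 cP5 cR0 cR1 cR2 cR3 cR4 cR5 cW0 cW1 cW2 cW3 cW4 cW5 A0 A1 A2 B0 B1 B2 G1 G2) with (24 * h21). { rewrite E21. ring. }
    rewrite F21, q1_24. unfold seg, estart, eend, vtx, Dl, rot, dot, psub, padd, pscal. simpl.
    rewrite ?Hp1, ?Hp2, ?HP1, ?HP2. cbn [fst snd]. unfold q2f, Ds3. ring. }
  assert (Z30 : Ds4 a1 a2 b1 b2 cP0 cP1 cP2 cP3 cP4 cP5 cR0 cR1 cR2 cR3 cR4 cR5 cW0 cW1 cW2 cW3 cW4 cW5 A0 A1 A2 B0 B1 B2 G1 G2 = 0).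
  { replace (Ds4 a1 a2 b1 b2 cP0 cP1 cP2 cP3 cP4 cP5 cR0 cR1 cR2 cR3 cR4 cR5 cW0 cW1 cW2 cW3 cW4 cW5 A0 A1 A2 B0 B1 B2 G1 G2) with (24 * h30). { rewrite E30. ring. }
    rewrite F30, q1_24. unfold seg, estart, eend, vtx, Dl, rot, dot, psub, padd, pscal. simpl.
    rewrite ?Hp1, ?Hp2, ?HP1, ?HP2. cbn [fst snd]. unfold q2f, Ds4. ring. }
  assert (Z31 : Ds5 a1 a2 b1 b2 cP0 cP1 cP2 cP3 cP4 cP5 cR0 cR1 cR2 cR3 cR4 cR5 cW0 cW1 cW2 cW3 cW4 cW5 A0 A1 A2 B0 B1 B2 G1 G2 = 0).
  { replace (Ds5 a1 a2 b1 b2 cP0 cP1 cP2 cP3 cP4 cP5 cR0 cR1 cR2 cR3 cR4 cR5 cW0 cW1 cW2 cW3 cW4 cW5 A0 A1 A2 B0 B1 B2 G1 G2) with (24 * h31). { rewrite E31. ring. }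
    rewrite F31, q1_24. unfold seg, estart, eend, vtx, Dl, rot, dot, psub, padd, pscal. simpl.
    rewrite ?Hp1, ?Hp2, ?HP1, ?HP2. cbn [fst snd]. unfold q2f, Ds5. ring. }
  assert (Zi1 : Ds6 a1 a2 b1 b2 cP0 cP1 cP2 cP3 cP4 cP5 cR0 cR1 cR2 cR3 cR4 cR5 cW0 cW1 cW2 cW3 cW4 cW5 A0 A1 A2 B0 B1 B2 G1 G2 = 0).
  { replace (Ds6 a1 a2 b1 b2 cP0 cP1 cP2 cP3 cP4 cP5 cR0 cR1 cR2 cR3 cR4 cR5 cW0 cW1 cW2 cW3 cW4 cW5 A0 A1 A2 B0 B1 B2 G1 G2) with (720 * hi1). { rewrite Ei1. ring. }
    rewrite Fi1, qtri_720. unfold tpt, psub, padd, pscal. cbn [fst snd].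
    rewrite ?Hp1, ?Hp2, ?HP1, ?HP2. cbn [fst snd]. unfold q2f, Ds6. ring. }
  assert (Zi2 : Ds7 a1 a2 b1 b2 cP0 cP1 cP2 cP3 cP4 cP5 cR0 cR1 cR2 cR3 cR4 cR5 cW0 cW1 cW2 cW3 cW4 cW5 A0 A1 A2 B0 B1 B2 G1 G2 = 0).
  { replace (Ds7 a1 a2 b1 b2 cP0 cP1 cP2 cP3 cP4 cP5 cR0 cR1 cR2 cR3 cR4 cR5 cW0 cW1 cW2 cW3 cW4 cW5 A0 A1 A2 B0 B1 B2 G1 G2) with (720 * hi2). { rewrite Ei2. ring. }
    rewrite Fi2, qtri_720. unfold tpt, psub, padd, pscal. cbn [fst snd].
    rewrite ?Hp1, ?Hp2, ?HP1, ?HP2. cbn [fst snd]. unfold q2f, Ds7. ring. }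

  assert (ELs : 720 * hL = ILs a1 a2 b1 b2 cP0 cP1 cP2 cP3 cP4 cP5 cR0 cR1 cR2 cR3 cR4 cR5 cW0 cW1 cW2 cW3 cW4 cW5 A0 A1 A2 B0 B1 B2 G1 G2).
  { rewrite EL. rewrite qtri_720.
    unfold tpt, dot, psub, padd, pscal, nabla_perp. cbn [fst snd].
    rewrite !(dder_q2 w2 o1 o2 cW0 cW1 cW2 cW3 cW4 cW5 Hw).
    rewrite !Hp1, !Hp2, !HP1, !HP2. cbn [fst snd]. unfold q2f, ILs. ring. }
  assert (Fin : 30 * ((a1*b2 - a2*b1) * ((a1*b2 - a2*b1) * ILs a1 a2 b1 b2 cP0 cP1 cP2 cP3 cP4 cP5 cR0 cR1 cR2 cR3 cR4 cR5 cW0 cW1 cW2 cW3 cW4 cW5 A0 A1 A2 B0 B1 B2 G1 G2))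
     - (a1*b2 - a2*b1) * (15 * (ls0 a1 a2 b1 b2 cP0 cP1 cP2 cP3 cP4 cP5 cR0 cR1 cR2 cR3 cR4 cR5 cW0 cW1 cW2 cW3 cW4 cW5 A0 A1 A2 B0 B1 B2 G1 G2 * Ds0 a1 a2 b1 b2 cP0 cP1 cP2 cP3 cP4 cP5 cR0 cR1 cR2 cR3 cR4 cR5 cW0 cW1 cW2 cW3 cW4 cW5 A0 A1 A2 B0 B1 B2 G1 G2) + 30 * (ls1 a1 a2 b1 b2 cP0 cP1 cP2 cP3 cP4 cP5 cR0 cR1 cR2 cR3 cR4 cR5 cW0 cW1 cW2 cW3 cW4 cW5 A0 A1 A2 B0 B1 B2 G1 G2 * Ds1 a1 a2 b1 b2 cP0 cP1 cP2 cP3 cP4 cP5 cR0 cR1 cR2 cR3 cR4 cR5 cW0 cW1 cW2 cW3 cW4 cW5 A0 A1 A2 B0 B1 B2 G1 G2) + 15 * (ls2 a1 a2 b1 b2 cP0 cP1 cP2 cP3 cP4 cP5 cR0 cR1 cR2 cR3 cR4 cR5 cW0 cW1 cW2 cW3 cW4 cW5 A0 A1 A2 B0 B1 B2 G1 G2 * Ds2 a1 a2 b1 b2 cP0 cP1 cP2 cP3 cP4 cP5 cR0 cR1 cR2 cR3 cR4 cR5 cW0 cW1 cW2 cW3 cW4 cW5 A0 A1 A2 B0 B1 B2 G1 G2) + 30 * (ls3 a1 a2 b1 b2 cP0 cP1 cP2 cP3 cP4 cP5 cR0 cR1 cR2 cR3 cR4 cR5 cW0 cW1 cW2 cW3 cW4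 cW5 A0 A1 A2 B0 B1 B2 G1 G2 * Ds3 a1 a2 b1 b2 cP0 cP1 cP2 cP3 cP4 cP5 cR0 cR1 cR2 cR3 cR4 cR5 cW0 cW1 cW2 cW3 cW4 cW5 A0 A1 A2 B0 B1 B2 G1 G2) + 15 * (ls4 a1 a2 b1 b2 cP0 cP1 cP2 cP3 cP4 cP5 cR0 cR1 cR2 cR3 cR4 cR5 cW0 cW1 cW2 cW3 cW4 cW5 A0 A1 A2 B0 B1 B2 G1 G2 * Ds4 a1 a2 b1 b2 cP0 cP1 cP2 cP3 cP4 cP5 cR0 cR1 cR2 cR3 cR4 cR5 cW0 cW1 cW2 cW3 cW4 cW5 A0 A1 A2 B0 B1 B2 G1 G2) + 30 * (ls5 a1 a2 b1 b2 cP0 cP1 cP2 cP3 cP4 cP5 cR0 cR1 cR2 cR3 cR4 cR5 cW0 cW1 cW2 cW3 cW4 cW5 A0 A1 A2 B0 B1 B2 G1 G2 * Ds5 a1 a2 b1 b2 cP0 cP1 cP2 cP3 cP4 cP5 cR0 cR1 cR2 cR3 cR4 cR5 cW0 cW1 cW2 cW3 cW4 cW5 A0 A1 A2 B0 B1 B2 G1 G2) + 2 * (ls6 a1 a2 b1 b2 cP0 cP1 cP2 cP3 cP4 cP5 cR0 cR1 cR2 cR3 cR4 cR5 cW0 cW1 cW2 cW3 cW4 cW5 A0 A1 A2 B0 B1 B2 G1 G2 * Ds6 a1 a2 b1 b2 cP0 cP1 cP2 cP3 cP4 cP5 cR0 cR1 cR2 cR3 cR4 cR5 cW0 cW1 cW2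 cW3 cW4 cW5 A0 A1 A2 B0 B1 B2 G1 G2) + 2 * (ls7 a1 a2 b1 b2 cP0 cP1 cP2 cP3 cP4 cP5 cR0 cR1 cR2 cR3 cR4 cR5 cW0 cW1 cW2 cW3 cW4 cW5 A0 A1 A2 B0 B1 B2 G1 G2 * Ds7 a1 a2 b1 b2 cP0 cP1 cP2 cP3 cP4 cP5 cR0 cR1 cR2 cR3 cR4 cR5 cW0 cW1 cW2 cW3 cW4 cW5 A0 A1 A2 B0 B1 B2 G1 G2))
     = 30 * (Us1 a1 a2 b1 b2 cP0 cP1 cP2 cP3 cP4 cP5 cR0 cR1 cR2 cR3 cR4 cR5 cW0 cW1 cW2 cW3 cW4 cW5 A0 A1 A2 B0 B1 B2 G1 G2 * Hq cW3 cW4 cW5 (Dl (o1, o2) (o1 + a1, o2 + a2) (o1 + b1, o2 + b2) 1) (Dl (o1, o2) (o1 + a1, o2 + a2) (o1 + b1, o2 + b2) 1)) + 30 * (Us2 a1 a2 b1 b2 cP0 cP1 cP2 cP3 cP4 cP5 cR0 cR1 cR2 cR3 cR4 cR5 cW0 cW1 cW2 cW3 cW4 cW5 A0 A1 A2 B0 B1 B2 G1 G2 * Hq cW3 cW4 cW5 (Dl (o1, o2) (o1 + a1, o2 + a2) (o1 + b1, o2 + b2) 2) (Dl (o1, o2) (o1 + a1, o2 + a2) (o1 + b1, o2 + b2) 2)) + 30 * (Us3 a1 a2 b1 b2 cP0 cP1 cP2 cP3 cP4 cP5 cR0 cR1 cR2 cR3 cR4 cR5 cW0 cW1 cW2 cW3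 cW4 cW5 A0 A1 A2 B0 B1 B2 G1 G2 * Hq cW3 cW4 cW5 (Dl (o1, o2) (o1 + a1, o2 + a2) (o1 + b1, o2 + b2) 3) (Dl (o1, o2) (o1 + a1, o2 + a2) (o1 + b1, o2 + b2) 3))).
  { unfold ILs, Ds0, Ds1, Ds2, Ds3, Ds4, Ds5, Ds6, Ds7, ls0, ls1, ls2, ls3, ls4, ls5, ls6, ls7, Us1, Us2, Us3.
    unfold Hq, Dl, estart, eend, vtx, psub. simpl. ring. }
  rewrite Z10, Z11, Z20, Z21, Z30, Z31, Zi1, Zi2, <- ELs in Fin.
  revert Fin.
  generalize (Us1 a1 a2 b1 b2 cP0 cP1 cP2 cP3 cP4 cP5 cR0 cR1 cR2 cR3 cR4 cR5 cW0 cW1 cW2 cW3 cW4 cW5 A0 A1 A2 B0 B1 B2 G1 G2 * Hq cW3 cW4 cW5 (Dl (o1, o2) (o1 + a1, o2 + a2) (o1 + b1, o2 + b2) 1) (Dl (o1, o2) (o1 + a1, o2 + a2) (o1 + b1, o2 + b2) 1)) (Us2 a1 a2 b1 b2 cP0 cP1 cP2 cP3 cP4 cP5 cR0 cR1 cR2 cR3 cR4 cR5 cW0 cW1 cW2 cW3 cW4 cW5 A0 A1 A2 B0 B1 B2 G1 G2 * Hq cW3 cW4 cW5 (Dl (o1, o2) (o1 + a1, o2 + a2) (o1 + b1, o2 + b2) 2) (Dl (o1, o2) (o1 + a1, o2 + a2) (o1 + b1, o2 + b2) 2)) (Us3 a1 a2 b1 b2 cP0 cP1 cP2 cP3 cP4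 cP5 cR0 cR1 cR2 cR3 cR4 cR5 cW0 cW1 cW2 cW3 cW4 cW5 A0 A1 A2 B0 B1 B2 G1 G2 * Hq cW3 cW4 cW5 (Dl (o1, o2) (o1 + a1, o2 + a2) (o1 + b1, o2 + b2) 3) (Dl (o1, o2) (o1 + a1, o2 + a2) (o1 + b1, o2 + b2) 3)).
  intros X1 X2 X3 Fin.
  assert (G : (a1*b2 - a2*b1) * hL * (720 * (a1*b2 - a2*b1)) = X1 + X2 + X3).
  { apply (Rmult_eq_reg_l 30); [| lra].
    replace (30 * (X1 + X2 + X3)) with (30 * X1 + 30 * X2 + 30 * X3) by ring.
    rewrite <- Fin. ring. }
  apply (Rmult_eq_reg_r (720 * (a1*b2 - a2*b1))); [| apply Rmult_integral_contrapositive_currified; lra].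
  rewrite G. field. exact Hcr.
Qed.
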